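(* Let $\gamma>1$, $J>0$, $S_0>0$ be constants, put $u_s:=(\gamma S_0J^{\gamma-1})^{1/(\gamma+1)}$, let $\bar u_i>0$ and $\bar\rho_i:=J/\bar u_i$, and assume $\zeta_0:=\bar u_i/u_s>1$. Define, for $u>0$, $$H(u):=\int_{u_s}^{u}\frac{J}{\bar u_i\,t^{\gamma+1}}\,(t^{\gamma+1}-u_s^{\gamma+1})(\bar u_i-t)\,dt,$$ and let $\mathcal T_{\rm acc}:=\{(u,E): u>0,\ \tfrac12E^2-H(u)=0,\ (u-u_s)E\ge 0\}$. Then for any fixed $(u_0,E_0)\in\mathcal T_{\rm acc}$ with $u_0<u_s$, there exists a finite constant $l_{\max}>0$ depending only on $(\gamma,J,S_0,\bar u_i,u_0)$ such that the initial value problem $$\bar u_1'=\frac{\bar E\,\bar u_1^{\gamma}}{\bar u_1^{\gamma+1}-u_s^{\gamma+1}},\qquad \bar E'=\frac{J}{\bar u_1}-\bar\rho_i\quad (x_1>0),\qquad (\bar u_1,\bar E)(0)=(u_0,E_0)$$ has a unique smooth solution for $x_1\in[0,l_{\max})$ satisfying: (i) $\bar u_1'(x_1)>0$ on $[0,l_{\max})$; (ii) $\lim_{x_1\to l_{\max}-}\bar u_1'(x_1)=0$; (iii) $\mathcal T_{\rm acc}\cap\{(\bar u_1,\bar E)(x_1):0\le x_1\le l_{\max}\}=\mathcal T_{\rm acc}\cap\{(u,E):u\ge u_0\}$; (iv) there exists a unique constant $\ell_s\in(0,l_{\max})$, depending only on $(\gamma,J,S_0,\bar u_i,u_0)$,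 such that $\bar u_1(x_1)<u_s$ for $x_1<\ell_s$, $\bar u_1(\ell_s)=u_s$, and $\bar u_1(x_1)>u_s$ for $x_1>\ell_s$. *)

(* Defs.v *)
From Stdlib Require Export Reals.
From Coquelicot Require Export Coquelicot.
Open Scope R_scope.

Definition u_s (gamma J S0 : R) : R :=
  Rpower (gamma * S0 * Rpower J (gamma - 1)) (1 / (gamma + 1)).

Definition H_fun (gamma J S0 ubi : R) (u : R) : R :=
  RInt (fun t => J / (ubi * Rpower t (gamma + 1))
                 * (Rpower t (gamma + 1) - Rpower (u_s gamma J S0) (gamma + 1))
                 * (ubi - t))
       (u_s gamma J S0) u.

Definition T_acc (gamma J S0 ubi : R) (u E : R) : Prop :=
  0 < u /\ E ^ 2 / 2 - H_fun gamma J S0 ubi u = 0 /\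
  0 <= (u - u_s gamma J S0) * E.

Definition has_deriv_within (A : R -> Prop) (f : R -> R) (x l : R) : Prop :=
  filterlim (fun y => (f y - f x) / (y - x))
            (within (fun y => A y /\ y <> x) (locally x)) (locally l).

Definition smooth_on (A : R -> Prop) (f : R -> R) : Prop :=
  exists D : nat -> R -> R,
    (forall x, A x -> D O x = f x) /\
    (forall (n : nat) x, A x -> has_deriv_within A (D n) x (D (S n) x)).

Definition Ico (a b : R) (x : R) : Prop := a <= x < b.

(* (u,E) is a smooth (positive) solution of the IVP on [0,l).
   The u-equation is imposed where its right-hand side is defined (u <> u_s). *)
Definition is_solution (gamma J S0 ubi u0 E0 l : R) (u E : R -> R) : Prop :=
  smooth_on (Ico 0 l) u /\ smooth_on (Ico 0 l) E /\
  (forall x, 0 <= x < l -> 0 < u x) /\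
  u 0 = u0 /\ E 0 = E0 /\
  (forall x, 0 < x < l -> u x <> u_s gamma J S0 ->
     is_derive u x (E x * Rpower (u x) gamma /
                    (Rpower (u x) (gamma + 1) - Rpower (u_s gamma J S0) (gamma + 1)))) /\
  (forall x, 0 < x < l -> is_derive E x (J / u x - J / ubi)).

(* Main.v *)
Require Import Defs.
From Stdlib Require Import Lra Lia Classical ClassicalEpsilon FunctionalExtensionality.
Open Scope R_scope.

Lemma ball_R (a b e : R) : ball a e b <-> Rabs (b - a) < e.
Proof. unfold ball; simpl; unfold AbsRing_ball, abs, minus, plus, opp; simpl. tauto. Qed.

Lemma deriv_eps (f : R -> R) (x l : R) : is_derive f x l <->
  forall e, 0 < e -> exists d, 0 < d /\ forall y, y <> x -> Rabs (y - x) < d ->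
    Rabs ((f y - f x) / (y - x) - l) < e.
Proof.
  rewrite is_derive_Reals. unfold derivable_pt_lim. split.
  - intros H e He. destruct (H e He) as [d Hd]. exists d. split. apply cond_pos.
    intros y Hy1 Hy2. specialize (Hd (y - x)). replace (x + (y - x)) with y in Hd by ring.
    apply Hd. lra. exact Hy2.
  - intros H e He. destruct (H e He) as [d [Hd H1]]. exists (mkposreal d Hd).
    intros h Hh1 Hh2. specialize (H1 (x + h)). replace (x + h - x) with h in H1 by ring.
    apply H1. lra. exact Hh2.
Qed.

Lemma within_eps (A : R -> Prop) (f : R -> R) (x l : R) : has_deriv_within A f x l <->
  forall e, 0 < e -> exists d, 0 < d /\ forall y, A y -> y <> x -> Rabs (y - x) < d ->
    Rabs ((f y - f x) / (y - x) - l) < e.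
Proof.
  unfold has_deriv_within. rewrite filterlim_locally. split.
  - intros H e He. destruct (H (mkposreal e He)) as [d Hd]. exists d. split. apply cond_pos.
    intros y Hy1 Hy2 Hy3. apply ball_R. apply Hd. apply ball_R. exact Hy3. tauto.
  - intros H e. destruct (H e (cond_pos e)) as [d [Hd H1]]. exists (mkposreal d Hd).
    intros y Hy [Hy1 Hy2]. apply ball_R. apply H1; auto.
Qed.

Lemma deriv_within (A : R -> Prop) (f : R -> R) (x l : R) :
  is_derive f x l -> has_deriv_within A f x l.
Proof.
  rewrite deriv_eps, within_eps. intros H e He. destruct (H e He) as [d [Hd H1]].
  exists d. split; auto.
Qed.

Lemma within_interior (A : R -> Prop) (f : R -> R) (x l r : R) :
  0 < r -> (forall y, Rabs (y - x) < r -> A y) ->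
  has_deriv_within A f x l -> is_derive f x l.
Proof.
  intros Hr HA. rewrite deriv_eps, within_eps. intros H e He. destruct (H e He) as [d [Hd H1]].
  exists (Rmin d r). split. apply Rmin_pos; auto.
  intros y Hy1 Hy2. apply H1; auto. apply HA. eapply Rlt_le_trans. apply Hy2. apply Rmin_r.
  eapply Rlt_le_trans. apply Hy2. apply Rmin_l.
Qed.

Lemma within_cont (A : R -> Prop) (f : R -> R) (x l : R) :
  has_deriv_within A f x l ->
  forall e, 0 < e -> exists d, 0 < d /\ forall y, A y -> Rabs (y - x) < d -> Rabs (f y - f x) < e.
Proof.
  rewrite within_eps. intros H e He. destruct (H 1 Rlt_0_1) as [d [Hd H1]].
  exists (Rmin d (e / (Rabs l + 1))). split.
  { apply Rmin_pos; auto. apply Rdiv_lt_0_compat; auto. pose proof (Rabs_pos l); lra. }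
  intros y Ay Hy. destruct (Req_dec y x) as [->|Hne]. { rewrite Rminus_eq_0, Rabs_R0; auto. }
  assert (Hy1 : Rabs (y - x) < d) by (eapply Rlt_le_trans; [apply Hy|apply Rmin_l]).
  assert (Hy2 : Rabs (y - x) < e / (Rabs l + 1)) by (eapply Rlt_le_trans; [apply Hy|apply Rmin_r]).
  specialize (H1 y Ay Hne Hy1).
  assert (Hq : Rabs ((f y - f x) / (y - x)) < Rabs l + 1).
  { pose proof (Rabs_triang_inv ((f y - f x) / (y - x)) l). lra. }
  replace (f y - f x) with ((f y - f x) / (y - x) * (y - x)) by (field; lra).
  rewrite Rabs_mult. 
  assert (0 < Rabs (y - x)) by (apply Rabs_pos_lt; lra).
  assert (0 < Rabs l + 1) by (pose proof (Rabs_pos l); lra).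
  apply Rle_lt_trans with ((Rabs l + 1) * Rabs (y - x)).
  apply Rmult_le_compat_r; lra.
  apply Rmult_lt_reg_r with (/ (Rabs l + 1)). apply Rinv_0_lt_compat; lra.
  replace ((Rabs l + 1) * Rabs (y - x) * / (Rabs l + 1)) with (Rabs (y - x)) by (field; lra).
  exact Hy2.
Qed.

Lemma deriv_cont (f : R -> R) (x l : R) : is_derive f x l ->
  forall e, 0 < e -> exists d, 0 < d /\ forall y, Rabs (y - x) < d -> Rabs (f y - f x) < e.
Proof.
  intros H. apply (deriv_within (fun _ => True)) in H.
  intros e He. destruct (within_cont _ _ _ _ H e He) as [d [Hd H1]]. exists d. split; auto.
Qed.

Lemma deriv_contpt (f : R -> R) (x l : R) : is_derive f x l -> continuity_pt f x.
Proof.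
  intros H. apply derivable_continuous_pt. exists l. apply is_derive_Reals. exact H.
Qed.

Definition rcont (f : R -> R) (a : R) :=
  forall e, 0 < e -> exists d, 0 < d /\ forall y, a <= y < a + d -> Rabs (f y - f a) < e.

Lemma zero_deriv_const (f : R -> R) (a b : R) :
  (forall y, a < y < b -> is_derive f y 0) -> rcont f a ->
  forall y, a <= y < b -> f y = f a.
Proof.
  intros Hd Hc y Hy. destruct (Req_dec y a) as [->|Hne]; auto.
  assert (Hconst : forall t, a < t < y -> f y = f t).
  { intros t Ht. destruct (MVT_gen f t y (fun _ => 0)) as [c [Hc1 Hc2]].
    - intros z Hz. apply Hd. rewrite Rmin_left, Rmax_right in Hz by lra. lra.
    - intros z Hz. rewrite Rmin_left, Rmax_right in Hz by lra. apply deriv_contpt with 0. apply Hd. lra.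
    - lra. }
  apply NNPP. intros Hneq. assert (He : 0 < Rabs (f y - f a)) by (apply Rabs_pos_lt; lra).
  destruct (Hc _ He) as [d [Hd0 H1]].
  set (t := a + Rmin (d / 2) ((y - a) / 2)).
  assert (Ht1 : 0 < Rmin (d / 2) ((y - a) / 2)) by (apply Rmin_pos; lra).
  assert (Ht2 : Rmin (d / 2) ((y - a) / 2) <= d / 2) by apply Rmin_l.
  assert (Ht3 : Rmin (d / 2) ((y - a) / 2) <= (y - a) / 2) by apply Rmin_r.
  specialize (H1 t). rewrite <- (Hconst t) in H1 by (unfold t; lra). unfold t in H1. lra.
Qed.

Lemma mono_deriv (f df : R -> R) (a b : R) :
  a <= b -> (forall y, a <= y <= b -> is_derive f y (df y) /\ df y <= 0) -> f b <= f a.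
Proof.
  intros Hab H. destruct (Req_dec a b) as [->|Hne]; [lra|].
  destruct (MVT_gen f a b df) as [c [Hc1 Hc2]].
  - intros z Hz. rewrite Rmin_left, Rmax_right in Hz by lra. apply H; lra.
  - intros z Hz. rewrite Rmin_left, Rmax_right in Hz by lra. apply deriv_contpt with (df z). apply H; lra.
  - rewrite Rmin_left, Rmax_right in Hc1 by lra. assert (df c <= 0) by (apply H; lra).
    assert (df c * (b - a) <= 0). { apply Rmult_le_0_r; lra. } lra.
Qed.

Lemma smono_deriv (f df : R -> R) (a b : R) :
  a < b -> (forall y, a <= y <= b -> is_derive f y (df y) /\ df y < 0) -> f b < f a.
Proof.
  intros Hab H.
  destruct (MVT_gen f a b df) as [c [Hc1 Hc2]].
  - intros z Hz. rewrite Rmin_left, Rmax_right in Hz by lra. apply H; lra.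
  - intros z Hz. rewrite Rmin_left, Rmax_right in Hz by lra. apply deriv_contpt with (df z). apply H; lra.
  - rewrite Rmin_left, Rmax_right in Hc1 by lra. assert (df c < 0) by (apply H; lra).
    assert (df c * (b - a) < 0). { apply Rmult_neg_pos; lra. } lra.
Qed.

Lemma cont_ind (L : R) (Q : R -> Prop) : 0 < L ->
  (forall t, 0 <= t < L -> (forall y, 0 <= y < t -> Q y) -> Q t) ->
  (forall t, 0 <= t < L -> (forall y, 0 <= y <= t -> Q y) ->
      exists d, 0 < d /\ forall y, t <= y < t + d -> Q y) ->
  forall y, 0 <= y < L -> Q y.
Proof.
  intros HL Hcl Hst.
  set (S := fun t => 0 <= t <= L /\ forall y, 0 <= y < t -> Q y).
  assert (Hb : bound S) by (exists L; intros t [Ht _]; lra).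
  assert (Hne : exists t, S t) by (exists 0; split; [lra| intros; lra]).
  destruct (completeness S Hb Hne) as [s [Hs1 Hs2]].
  assert (Hs0 : 0 <= s) by (apply Hs1; split; [lra|intros; lra]).
  assert (HsL : s <= L) by (apply Hs2; intros t [Ht _]; lra).
  assert (Hbelow : forall y, 0 <= y < s -> Q y).
  { intros y Hy. apply NNPP. intros HQ.
    assert (s <= y). { apply Hs2. intros t [Ht1 Ht2]. destruct (Rle_lt_dec t y) as [?|Hlt]; auto.
      exfalso. apply HQ. apply Ht2. lra. } lra. }
  destruct (Req_dec s L) as [->|HsL']. { exact Hbelow. }
  exfalso. assert (Qs : Q s) by (apply Hcl; [lra|exact Hbelow]).
  destruct (Hst s ltac:(lra)) as [d [Hd H1]].
  { intros y Hy. destruct (Req_dec y s) as [->|?]; auto. apply Hbelow; lra. }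
  set (t := Rmin (s + d / 2) L).
  assert (S t).
  { split. unfold t. split. apply Rmin_glb; lra. apply Rmin_r.
    intros y Hy. destruct (Rlt_le_dec y s). apply Hbelow; lra. apply H1.
    split; auto. assert (t <= s + d/2) by apply Rmin_l. lra. }
  assert (Hts : t <= s) by (apply Hs1; auto).
  unfold t in Hts. unfold Rmin in Hts. destruct (Rle_dec (s + d / 2) L); lra.
Qed.

Lemma left_eq (f g : R -> R) (t : R) (a : R) : a < t ->
  (forall e, 0 < e -> exists d, 0 < d /\ forall y, a <= y < t -> Rabs (y - t) < d -> Rabs (f y - f t) < e) ->
  (forall e, 0 < e -> exists d, 0 < d /\ forall y, a <= y < t -> Rabs (y - t) < d -> Rabs (g y - g t) < e) ->
  (forall y, a <= y < t -> f y = g y) -> f t = g t.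
Proof.
  intros Hat Hf Hg Heq. apply NNPP. intros Hne.
  assert (He : 0 < Rabs (f t - g t) / 2) by (assert (0 < Rabs (f t - g t)) by (apply Rabs_pos_lt; lra); lra).
  destruct (Hf _ He) as [d1 [Hd1 H1]]. destruct (Hg _ He) as [d2 [Hd2 H2]].
  set (y := Rmax a (t - Rmin d1 d2 / 2)).
  assert (0 < Rmin d1 d2) by (apply Rmin_pos; auto).
  assert (Rmin d1 d2 <= d1) by apply Rmin_l. assert (Rmin d1 d2 <= d2) by apply Rmin_r.
  assert (Hy : a <= y < t). { unfold y, Rmax. destruct (Rle_dec a (t - Rmin d1 d2 / 2)); lra. }
  assert (Hy2 : Rabs (y - t) < Rmin d1 d2).
  { unfold y, Rmax. destruct (Rle_dec a (t - Rmin d1 d2 / 2)); rewrite Rabs_left; lra. }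
  specialize (H1 y Hy ltac:(lra)). specialize (H2 y Hy ltac:(lra)). rewrite Heq in H1 by auto.
  pose proof (Rabs_triang (g y - f t) (g t - g y)) as HT.
  replace (g y - f t + (g t - g y)) with (-(f t - g t)) in HT by ring. rewrite Rabs_Ropp in HT.
  rewrite <- Rabs_Ropp in H2. replace (- (g y - g t)) with (g t - g y) in H2 by ring. lra.
Qed.

Lemma left_deriv_eq (f g : R -> R) (t a lf lg : R) : a < t ->
  is_derive f t lf -> is_derive g t lg -> (forall y, a <= y <= t -> f y = g y) -> lf = lg.
Proof.
  intros Hat Hf Hg Heq. rewrite deriv_eps in Hf, Hg. apply NNPP. intros Hne.
  assert (He : 0 < Rabs (lf - lg) / 2) by (assert (0 < Rabs (lf - lg)) by (apply Rabs_pos_lt; lra); lra).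
  destruct (Hf _ He) as [d1 [Hd1 H1]]. destruct (Hg _ He) as [d2 [Hd2 H2]].
  set (y := Rmax a (t - Rmin d1 d2 / 2)).
  assert (0 < Rmin d1 d2) by (apply Rmin_pos; auto).
  assert (Rmin d1 d2 <= d1) by apply Rmin_l. assert (Rmin d1 d2 <= d2) by apply Rmin_r.
  assert (Hy : a <= y < t). { unfold y, Rmax. destruct (Rle_dec a (t - Rmin d1 d2 / 2)); lra. }
  assert (Hy2 : Rabs (y - t) < Rmin d1 d2).
  { unfold y, Rmax. destruct (Rle_dec a (t - Rmin d1 d2 / 2)); rewrite Rabs_left; lra. }
  specialize (H1 y ltac:(lra) ltac:(lra)). specialize (H2 y ltac:(lra) ltac:(lra)).
  rewrite (Heq y), (Heq t) in H1 by lra.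
  pose proof (Rabs_triang ((g y - g t) / (y - t) - lf) (lg - (g y - g t) / (y - t))) as HT.
  replace ((g y - g t) / (y - t) - lf + (lg - (g y - g t) / (y - t))) with (-(lf - lg)) in HT by ring.
  rewrite Rabs_Ropp in HT. rewrite <- Rabs_Ropp in H2.
  replace (- ((g y - g t) / (y - t) - lg)) with (lg - (g y - g t) / (y - t)) in H2 by ring. lra.
Qed.

Lemma pos_deriv_right (f : R -> R) (t d : R) : is_derive f t d -> 0 < d ->
  exists r, 0 < r /\ forall y, t < y < t + r -> f t < f y.
Proof.
  rewrite deriv_eps. intros H Hd. destruct (H d Hd) as [r [Hr H1]]. exists r. split; auto.
  intros y Hy. assert (Hyt : Rabs (y - t) < r) by (rewrite Rabs_right; lra).
  specialize (H1 y ltac:(lra) Hyt).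
  apply Rabs_lt_between in H1. destruct H1 as [H1 _].
  assert (0 < (f y - f t) / (y - t)) by lra.
  assert (0 < (f y - f t)). { replace (f y - f t) with ((f y - f t) / (y - t) * (y - t)) by (field; lra).
    apply Rmult_lt_0_compat; lra. } lra.
Qed.
Lemma d_const (c x : R) : is_derive (fun _ : R => c) x 0.
Proof. exact (is_derive_const c x). Qed.
Lemma d_id (x : R) : is_derive (fun t : R => t) x 1.
Proof. exact (is_derive_id x). Qed.
Lemma d_plus (f g : R -> R) (x a b : R) : is_derive f x a -> is_derive g x b -> is_derive (fun t => f t + g t) x (a + b).
Proof. intros. exact (is_derive_plus f g x a b H H0). Qed.
Lemma d_minus (f g : R -> R) (x a b : R) : is_derive f x a -> is_derive g x b -> is_derive (fun t => f t - g t) x (a - b).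
Proof. intros. exact (is_derive_minus f g x a b H H0). Qed.
Lemma d_mult (f g : R -> R) (x a b : R) : is_derive f x a -> is_derive g x b -> is_derive (fun t => f t * g t) x (a * g x + f x * b).
Proof. intros. exact (is_derive_mult f g x a b H H0 Rmult_comm). Qed.
Lemma d_comp (f g : R -> R) (x a b : R) : is_derive f (g x) a -> is_derive g x b -> is_derive (fun t => f (g t)) x (a * b).
Proof. intros. rewrite Rmult_comm. exact (is_derive_comp f g x a b H H0). Qed.

Lemma d_eq (f g : R -> R) (x l l' : R) : is_derive f x l -> (forall z, f z = g z) -> l = l' -> is_derive g x l'.
Proof. intros H Hfg <-. apply (is_derive_ext f g); auto. Qed.

Lemma d_eq_loc (f g : R -> R) (x l l' r : R) : 0 < r -> is_derive f x l ->
  (forall z, Rabs (z - x) < r -> f z = g z) -> l = l' -> is_derive g x l'.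
Proof.
  intros Hr H Hfg <-. apply (is_derive_ext_loc f g); auto.
  exists (mkposreal r Hr). intros y Hy. apply Hfg. apply ball_R in Hy. exact Hy.
Qed.

Lemma sdec2 (f df : R -> R) (a b : R) : a < b ->
  (forall y, a <= y <= b -> is_derive f y (df y) /\ df y <= 0) ->
  (forall y, a < y < b -> df y < 0) -> f b < f a.
Proof.
  intros Hab H1 H2. set (a' := a + (b - a) / 3). set (b' := b - (b - a) / 3).
  assert (f a' <= f a) by (apply (mono_deriv f df); unfold a'; [lra|]; intros y Hy; apply H1; lra).
  assert (f b <= f b') by (apply (mono_deriv f df); unfold b'; [lra|]; intros y Hy; apply H1; lra).
  assert (f b' < f a') by (apply (smono_deriv f df); unfold a', b'; [lra|]; intros y Hy; split; [apply H1; lra| apply H2; lra]).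
  lra.
Qed.

Lemma sinc2 (f df : R -> R) (a b : R) : a < b ->
  (forall y, a <= y <= b -> is_derive f y (df y) /\ 0 <= df y) ->
  (forall y, a < y < b -> 0 < df y) -> f a < f b.
Proof.
  intros Hab H1 H2. assert (- f b < - f a); [|lra].
  apply (sdec2 (fun x => - f x) (fun x => - df x)); auto.
  intros y Hy. destruct (H1 y Hy) as [Hd Hs]. split; [|lra].
  apply (d_eq (fun x => 0 - f x) _ y (0 - df y)). apply d_minus. apply d_const. exact Hd. intros; ring. ring.
  intros y Hy. specialize (H2 y Hy). lra.
Qed.

Lemma inc_le (f df : R -> R) (a b : R) : a <= b ->
  (forall y, a <= y <= b -> is_derive f y (df y) /\ 0 <= df y) -> f a <= f b.
Proof.
  intros Hab H1. assert (- f b <= - f a); [|lra].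
  apply (mono_deriv (fun x => - f x) (fun x => - df x)); auto.
  intros y Hy. destruct (H1 y Hy) as [Hd Hs]. split; [|lra].
  apply (d_eq (fun x => 0 - f x) _ y (0 - df y)). apply d_minus. apply d_const. exact Hd. intros; ring. ring.
Qed.

Lemma cont_zero (f : R -> R) (c l r : R) : is_derive f c l -> 0 < r ->
  (forall x, x <> c -> Rabs (x - c) < r -> f x = 0) -> f c = 0.
Proof.
  intros Hd Hr Hz. apply NNPP. intros Hne. assert (He : 0 < Rabs (f c)) by (apply Rabs_pos_lt; auto).
  destruct (deriv_cont f c l Hd _ He) as [d [Hd0 H1]].
  set (x := c + Rmin d r / 2). assert (0 < Rmin d r) by (apply Rmin_pos; auto).
  assert (Rmin d r <= d) by apply Rmin_l. assert (Rmin d r <= r) by apply Rmin_r.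
  assert (Hx : Rabs (x - c) = Rmin d r / 2) by (unfold x; rewrite Rabs_right; lra).
  specialize (H1 x ltac:(lra)). assert (Hxc : x <> c) by (unfold x; lra).
  rewrite (Hz x Hxc ltac:(lra)) in H1.
  rewrite Rminus_0_l, Rabs_Ropp in H1. lra.
Qed.

Lemma rcont_const (c a : R) : rcont (fun _ => c) a.
Proof. intros e He. exists 1. split. lra. intros. rewrite Rminus_eq_0, Rabs_R0. auto. Qed.

Lemma rcont_id (a : R) : rcont (fun y => y) a.
Proof. intros e He. exists e. split. auto. intros y Hy. rewrite Rabs_right; lra. Qed.

Lemma rcont_plus (f g : R -> R) (a : R) : rcont f a -> rcont g a -> rcont (fun y => f y + g y) a.
Proof.
  intros Hf Hg e He. destruct (Hf (e/2) ltac:(lra)) as [d1 [Hd1 H1]]. destruct (Hg (e/2) ltac:(lra)) as [d2 [Hd2 H2]].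
  exists (Rmin d1 d2). split. apply Rmin_pos; auto. intros y Hy.
  assert (Rmin d1 d2 <= d1) by apply Rmin_l. assert (Rmin d1 d2 <= d2) by apply Rmin_r.
  specialize (H1 y ltac:(lra)). specialize (H2 y ltac:(lra)).
  replace (f y + g y - (f a + g a)) with ((f y - f a) + (g y - g a)) by ring.
  pose proof (Rabs_triang (f y - f a) (g y - g a)). lra.
Qed.

Lemma rcont_opp (f : R -> R) (a : R) : rcont f a -> rcont (fun y => - f y) a.
Proof.
  intros Hf e He. destruct (Hf e He) as [d [Hd H1]]. exists d. split; auto. intros y Hy.
  replace (- f y - - f a) with (- (f y - f a)) by ring. rewrite Rabs_Ropp. auto.
Qed.

Lemma rcont_mult (f g : R -> R) (a : R) : rcont f a -> rcont g a -> rcont (fun y => f y * g y) a.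
Proof.
  intros Hf Hg e He. set (K := 1 + Rabs (f a) + Rabs (g a)).
  assert (HK : 1 <= K) by (unfold K; pose proof (Rabs_pos (f a)); pose proof (Rabs_pos (g a)); lra).
  set (eta := Rmin 1 (e / (2 * K))).
  assert (Heta : 0 < eta) by (apply Rmin_pos; [lra|apply Rdiv_lt_0_compat; lra]).
  assert (Heta1 : eta <= 1) by apply Rmin_l.
  assert (Heta2 : eta <= e / (2 * K)) by apply Rmin_r.
  destruct (Hf eta Heta) as [d1 [Hd1 H1]]. destruct (Hg eta Heta) as [d2 [Hd2 H2]].
  exists (Rmin d1 d2). split. apply Rmin_pos; auto. intros y Hy.
  assert (Rmin d1 d2 <= d1) by apply Rmin_l. assert (Rmin d1 d2 <= d2) by apply Rmin_r.
  specialize (H1 y ltac:(lra)). specialize (H2 y ltac:(lra)).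
  replace (f y * g y - f a * g a) with ((f y - f a) * (g y - g a) + f a * (g y - g a) + g a * (f y - f a)) by ring.
  eapply Rle_lt_trans. apply Rabs_triang. eapply Rle_lt_trans. apply Rplus_le_compat_r. apply Rabs_triang.
  rewrite !Rabs_mult.
  assert (Rabs (f y - f a) * Rabs (g y - g a) <= eta * eta) by (apply Rmult_le_compat; try apply Rabs_pos; lra).
  assert (Rabs (f a) * Rabs (g y - g a) <= Rabs (f a) * eta) by (apply Rmult_le_compat_l; [apply Rabs_pos|lra]).
  assert (Rabs (g a) * Rabs (f y - f a) <= Rabs (g a) * eta) by (apply Rmult_le_compat_l; [apply Rabs_pos|lra]).
  assert (eta * eta <= eta) by nra.
  assert (eta * K <= e / 2).
  { apply Rle_trans with (e / (2 * K) * K). apply Rmult_le_compat_r; lra. right; field; lra. }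
  unfold K in *. lra.
Qed.

Lemma rcont_comp (f g : R -> R) (a : R) : rcont f a ->
  (forall e, 0 < e -> exists d, 0 < d /\ forall z, Rabs (z - f a) < d -> Rabs (g z - g (f a)) < e) ->
  rcont (fun y => g (f y)) a.
Proof.
  intros Hf Hg e He. destruct (Hg e He) as [d [Hd H1]]. destruct (Hf d Hd) as [d2 [Hd2 H2]].
  exists d2. split. exact Hd2. intros y Hy. apply H1. apply H2. exact Hy.
Qed.

Lemma rcont_within (A : R -> Prop) (f : R -> R) (a l b : R) : a < b -> (forall y, a <= y < b -> A y) ->
  has_deriv_within A f a l -> rcont f a.
Proof.
  intros Hab HA Hd e He. destruct (within_cont A f a l Hd e He) as [d [Hd0 H1]].
  exists (Rmin d (b - a)). split. apply Rmin_pos; lra. intros y Hy.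
  assert (Rmin d (b - a) <= d) by apply Rmin_l. assert (Rmin d (b - a) <= b - a) by apply Rmin_r.
  apply H1. apply HA. lra. rewrite Rabs_right; lra.
Qed.

Lemma smooth_within (A : R -> Prop) (f : R -> R) : smooth_on A f ->
  forall x, A x -> exists l, has_deriv_within A f x l.
Proof.
  intros [D [H0 H1]] x Ax. exists (D 1%nat x). specialize (H1 O x Ax).
  rewrite within_eps in *. intros e He. destruct (H1 e He) as [d [Hd H2]]. exists d. split; auto.
  intros y Ay Hyx Hy. rewrite <- (H0 y Ay), <- (H0 x Ax). apply H2; auto.
Qed.

Lemma atleft_lim (f : R -> R) (a L : R) :
  (forall e, 0 < e -> exists d, 0 < d /\ forall y, a - d < y < a -> Rabs (f y - L) < e) ->
  filterlim f (at_left a) (locally L).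
Proof.
  intros H. apply filterlim_locally. intros e. destruct (H e (cond_pos e)) as [d [Hd H1]].
  exists (mkposreal d Hd). intros y Hy Hya. apply ball_R. apply H1. apply ball_R in Hy. simpl in Hy.
  apply Rabs_lt_between in Hy. change (minus y a) with (y - a) in Hy. lra.
Qed.


Definition dfam (I : R -> Prop) (F : nat -> R -> R) :=
  forall n x, I x -> is_derive (F n) x (F (S n) x).

Inductive ex : Type :=
| EAt (F : nat -> R -> R)
| EAdd (e1 e2 : ex) | EMul (e1 e2 : ex)
| EComp (J : R -> Prop) (G : nat -> R -> R) (e : ex)
| EVar (u : R -> R) (J : R -> Prop) (P : nat -> R -> R).

Fixpoint ev (e : ex) : R -> R := match e with
| EAt F => F 0%nat
| EAdd e1 e2 => fun x => ev e1 x + ev e2 x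
| EMul e1 e2 => fun x => ev e1 x * ev e2 x
| EComp J G e => fun x => G 0%nat (ev e x)
| EVar u J P => u end.

Fixpoint dr (e : ex) : ex := match e with
| EAt F => EAt (fun n => F (S n))
| EAdd e1 e2 => EAdd (dr e1) (dr e2)
| EMul e1 e2 => EAdd (EMul (dr e1) e2) (EMul e1 (dr e2))
| EComp J G e => EMul (EComp J (fun n => G (S n)) e) (dr e)
| EVar u J P => EComp J P (EVar u J P) end.

Fixpoint valid (I : R -> Prop) (e : ex) : Prop := match e with
| EAt F => dfam I F
| EAdd e1 e2 => valid I e1 /\ valid I e2
| EMul e1 e2 => valid I e1 /\ valid I e2
| EComp J G e => dfam J G /\ valid I e /\ forall x, I x -> J (ev e x)
| EVar u J P => dfam J P /\ forall x, I x -> J (u x) /\ is_derive u x (P 0%nat (u x)) end.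

Lemma dr_ok I e : valid I e -> valid I (dr e) /\ forall x, I x -> is_derive (ev e) x (ev (dr e) x).
Proof.
  induction e as [F|e1 IH1 e2 IH2|e1 IH1 e2 IH2|J G e IH|u J P]; simpl.
  - intros H. split. intros n x Hx. apply H; auto. intros x Hx. apply H; auto.
  - intros [H1 H2]. destruct (IH1 H1) as [V1 D1]. destruct (IH2 H2) as [V2 D2]. split. tauto.
    intros x Hx. apply (is_derive_plus (ev e1) (ev e2)); auto.
  - intros [H1 H2]. destruct (IH1 H1) as [V1 D1]. destruct (IH2 H2) as [V2 D2]. split. tauto.
    intros x Hx. apply (is_derive_mult (ev e1) (ev e2)); auto. intros; apply Rmult_comm.
  - intros [HG [He HJ]]. destruct (IH He) as [V D]. split.
    + split; [|auto]. split; [|split; auto]. intros n x Hx. apply HG; auto.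
    + intros x Hx. 
      assert (H := is_derive_comp (G 0%nat) (ev e) x (G 1%nat (ev e x)) (ev (dr e) x) (HG 0%nat _ (HJ x Hx)) (D x Hx)).
      unfold scal in H; simpl in H; unfold mult in H; simpl in H. rewrite Rmult_comm. exact H.
  - intros [HP Hu]. split.
    + split; auto. split; auto. intros x Hx; apply Hu; auto.
    + intros x Hx. apply Hu; auto.
Qed.

Lemma iter_valid I e n : valid I e -> valid I (Nat.iter n dr e).
Proof. induction n; simpl; auto. intros H. apply dr_ok. auto. Qed.

Lemma ex_dfam I e : valid I e -> dfam I (fun n => ev (Nat.iter n dr e)).
Proof.
  intros H n x Hx. simpl. apply (proj2 (dr_ok I _ (iter_valid I e n H))). auto.
Qed.

Definition cfam (c : R) (n : nat) (x : R) : R := match n with O => c | _ => 0 end.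
Lemma cfam_ok I c : dfam I (cfam c).
Proof. intros n x _. destruct n; simpl; apply d_const. Qed.

Definition idfam (n : nat) (x : R) : R := match n with O => x | 1%nat => 1 | _ => 0 end.
Lemma idfam_ok I : dfam I idfam.
Proof. intros n x _. destruct n as [|[|n]]; simpl. apply d_id. apply d_const. apply d_const. Qed.

Fixpoint prodc (a : R) (n : nat) : R := match n with O => 1 | S n => prodc a n * (a - INR n) end.
Definition pwfam (a : R) (n : nat) (x : R) : R := prodc a n * Rpower x (a - INR n).

Lemma Rpower_pos' x y : 0 < Rpower x y.
Proof. unfold Rpower. apply exp_pos. Qed.

Lemma pwfam_ok a : dfam (fun x => 0 < x) (pwfam a).
Proof.
  intros n x Hx. unfold pwfam. cbn [prodc].
  assert (H : is_derive (fun x0 => Rpower x0 (a - INR n)) x ((a - INR n) * Rpower x (a - INR n - 1)))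
    by (apply is_derive_Reals; apply derivable_pt_lim_power; exact Hx).
  apply (is_derive_scal _ _ (prodc a n)) in H.
  rewrite S_INR. replace (a - (INR n + 1)) with (a - INR n - 1) by ring. rewrite Rmult_assoc. exact H.
Qed.

Lemma dfam_sub (I I' : R -> Prop) F : dfam I F -> (forall x, I' x -> I x) -> dfam I' F.
Proof. intros H Hs n x Hx. apply H. auto. Qed.

Lemma ev_der_eq (lo hi : R) (e : ex) (f : R -> R) :
  valid (fun x => lo < x < hi) e -> (forall x, lo < x < hi -> f x = ev e x) ->
  forall x, lo < x < hi -> is_derive f x (ev (dr e) x).
Proof.
  intros Hv Hf x Hx. destruct (dr_ok _ e Hv) as [_ Hd].
  apply (d_eq_loc (ev e) f x (ev (dr e) x) _ (Rmin (x - lo) (hi - x))).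
  apply Rmin_pos; lra. apply Hd; auto.
  intros z Hz. symmetry. apply Hf. assert (Rmin (x - lo) (hi - x) <= x - lo) by apply Rmin_l.
  assert (Rmin (x - lo) (hi - x) <= hi - x) by apply Rmin_r. apply Rabs_lt_between in Hz. lra. reflexivity.
Qed.


Lemma seg_in (lo hi a b : R) : lo < a < hi -> lo < b < hi ->
  forall z, Rmin a b <= z <= Rmax a b -> lo < z < hi.
Proof. intros Ha Hb z Hz. unfold Rmin, Rmax in Hz. destruct (Rle_dec a b); lra. Qed.

Lemma cont_of_deriv (f : R -> R) (x l : R) : is_derive f x l -> continuous f x.
Proof. intros H. apply continuity_pt_filterlim. apply deriv_contpt with l. exact H. Qed.

Lemma ex_RInt_I (lo hi : R) (f : R -> R) (a b : R) :
  (forall x, lo < x < hi -> exists l, is_derive f x l) -> lo < a < hi -> lo < b < hi ->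
  ex_RInt f a b.
Proof.
  intros Hf Ha Hb. apply (ex_RInt_continuous (V:=R_CompleteNormedModule)). intros z Hz.
  destruct (Hf z (seg_in lo hi a b Ha Hb z Hz)) as [l Hl]. apply cont_of_deriv with l. exact Hl.
Qed.

Lemma ftc_I (lo hi : R) (f : R -> R) (a : R) :
  (forall x, lo < x < hi -> exists l, is_derive f x l) -> lo < a < hi ->
  forall t, lo < t < hi -> is_derive (fun t => RInt f a t) t (f t).
Proof.
  intros Hf Ha t Ht. apply (is_derive_RInt f (fun t => RInt f a t) a t).
  - assert (He : 0 < Rmin (t - lo) (hi - t)) by (apply Rmin_pos; lra).
    exists (mkposreal _ He). intros y Hy. apply ball_R in Hy. simpl in Hy.
    assert (Rmin (t - lo) (hi - t) <= t - lo) by apply Rmin_l.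
    assert (Rmin (t - lo) (hi - t) <= hi - t) by apply Rmin_r.
    apply Rabs_lt_between in Hy. change (minus y t) with (y - t) in Hy.
    apply (RInt_correct (V:=R_CompleteNormedModule)). apply (ex_RInt_I lo hi); auto. lra.
  - destruct (Hf t Ht) as [l Hl]. apply cont_of_deriv with l. exact Hl.
Qed.

Lemma const_I (lo hi : R) (f : R -> R) :
  (forall y, lo < y < hi -> is_derive f y 0) ->
  forall a b, lo < a < hi -> lo < b < hi -> f a = f b.
Proof.
  intros Hd a b Ha Hb. destruct (MVT_gen f a b (fun _ => 0)) as [c [Hc1 Hc2]].
  - intros z Hz. apply Hd. apply (seg_in lo hi a b Ha Hb). lra.
  - intros z Hz. apply deriv_contpt with 0. apply Hd. apply (seg_in lo hi a b Ha Hb). lra.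
  - lra.
Qed.

Definition Pk (c : R) (k : nat) (b : R -> R) (t : R) : R :=
  if Req_EM_T t c then b c / INR (S k)
  else RInt (fun w => (w - c) ^ k * b w) c t / (t - c) ^ (S k).

Lemma d_powc (c y : R) (n : nat) : is_derive (fun y => (y - c) ^ S n) y (INR (S n) * (y - c) ^ n).
Proof.
  assert (H := is_derive_pow (fun y => y - c) (S n) y 1).
  simpl pred in H. rewrite Rmult_1_r in H. apply H.
  replace 1 with (1 - 0) by ring. apply d_minus. apply d_id. apply d_const.
Qed.

Lemma d_pow0 (c y : R) (n : nat) : exists l, is_derive (fun y => (y - c) ^ n) y l.
Proof. destruct n. exists 0. simpl. apply d_const. eexists. apply d_powc. Qed.

Lemma integrand_der (lo hi c : R) (k : nat) (b b1 : R -> R) :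
  (forall x, lo < x < hi -> is_derive b x (b1 x)) ->
  forall x, lo < x < hi -> exists l, is_derive (fun w => (w - c) ^ k * b w) x l.
Proof.
  intros Hb x Hx. destruct (d_pow0 c x k) as [l Hl]. eexists. apply d_mult. exact Hl. apply Hb; auto.
Qed.

Lemma Pk_der (lo hi c : R) (k : nat) (b b1 b2 : R -> R) : lo < c < hi ->
  (forall x, lo < x < hi -> is_derive b x (b1 x)) ->
  (forall x, lo < x < hi -> is_derive b1 x (b2 x)) ->
  forall t, lo < t < hi -> is_derive (Pk c k b) t (Pk c (S k) b1 t).
Proof.
  intros Hc Hb Hb1 t Ht.
  set (A := fun y => (RInt (fun w => (w - c) ^ k * b w) c y : R)).
  set (B := fun y => (RInt (fun w => (w - c) ^ S k * b1 w) c y : R)).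
  assert (HA : forall y, lo < y < hi -> is_derive A y ((y - c) ^ k * b y)).
  { intros y Hy. apply (ftc_I lo hi (fun w => (w - c) ^ k * b w)); auto. apply (integrand_der lo hi c k b b1); auto. }
  assert (HB : forall y, lo < y < hi -> is_derive B y ((y - c) ^ S k * b1 y)).
  { intros y Hy. apply (ftc_I lo hi (fun w => (w - c) ^ S k * b1 w)); auto. apply (integrand_der lo hi c (S k) b1 b2); auto. }
  destruct (Req_EM_T t c) as [Etc|Ntc].
  -
    subst t. apply deriv_eps. intros e He.
    set (Rf := fun y => A y - b c * (y - c) ^ S k / INR (S k) - b1 c * (y - c) ^ S (S k) / INR (S (S k))).
    assert (HR : forall y, lo < y < hi -> is_derive Rf y ((y - c) ^ k * (b y - b c - b1 c * (y - c)))).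
    { intros y Hy. unfold Rf.
      assert (H1 := d_powc c y k). assert (H2 := d_powc c y (S k)).
      apply (is_derive_scal _ _ (b c / INR (S k))) in H1.
      apply (is_derive_scal _ _ (b1 c / INR (S (S k)))) in H2.
      assert (H3 := d_minus _ _ _ _ _ (d_minus _ _ _ _ _ (HA y Hy) H1) H2).
      eapply d_eq. exact H3. intros z. cbv beta. unfold Rdiv. ring.
      assert (N1 : INR (S k) <> 0) by (apply not_0_INR; lia).
      assert (N2 : INR (S (S k)) <> 0) by (apply not_0_INR; lia).
      revert N1 N2. generalize (INR (S k)) (INR (S (S k))). intros r1 r2 N1 N2.
      change ((y - c) ^ S k) with ((y - c) * (y - c) ^ k). field. auto. }
    assert (HR0 : Rf c = 0).
    { unfold Rf, A. rewrite RInt_point. rewrite Rminus_eq_0. change (@zero R_CompleteNormedModule) with 0. rewrite !pow_i by lia. field; repeat split; try (apply not_0_INR; lia); auto. }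
    assert (He2 : 0 < e / 2) by lra.
    destruct (proj1 (deriv_eps _ _ _) (Hb c Hc) (e / 2) He2) as [d1 [Hd1 Hb']].
    set (d := Rmin d1 (Rmin (c - lo) (hi - c))).
    assert (Hd : 0 < d) by (apply Rmin_pos; auto; apply Rmin_pos; lra).
    assert (Hdd1 : d <= d1) by apply Rmin_l.
    assert (Hdd2 : d <= c - lo) by (eapply Rle_trans; [apply Rmin_r|apply Rmin_l]).
    assert (Hdd3 : d <= hi - c) by (eapply Rle_trans; [apply Rmin_r|apply Rmin_r]).
    exists d. split; auto. intros y Hyc Hyd.
    assert (Hy : lo < y < hi) by (apply Rabs_lt_between in Hyd; lra).
    unfold Pk. destruct (Req_EM_T y c) as [|_]; [contradiction|].
    destruct (Req_EM_T c c) as [_|Hcc]; [|contradiction].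
    destruct (MVT_gen Rf c y (fun y => (y - c) ^ k * (b y - b c - b1 c * (y - c)))) as [xi [Hxi Hmvt]].
    { intros z Hz. apply HR. apply (seg_in lo hi c y Hc Hy). lra. }
    { intros z Hz. eapply deriv_contpt. apply HR. apply (seg_in lo hi c y Hc Hy). lra. }
    rewrite HR0, Rminus_0_r in Hmvt.
    assert (Hxc : Rabs (xi - c) <= Rabs (y - c)).
    { unfold Rmin, Rmax in Hxi. destruct (Rle_dec c y).
      rewrite !Rabs_right; lra. rewrite !Rabs_left1; lra. }
    assert (Hbnd : Rabs (b xi - b c - b1 c * (xi - c)) <= e / 2 * Rabs (xi - c)).
    { destruct (Req_dec xi c) as [->|Hne].
      - replace (b c - b c - b1 c * (c - c)) with 0 by ring. rewrite Rminus_eq_0, !Rabs_R0. lra.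
      - specialize (Hb' xi Hne ltac:(lra)).
        replace (b xi - b c - b1 c * (xi - c)) with (((b xi - b c) / (xi - c) - b1 c) * (xi - c)) by (field; lra).
        rewrite Rabs_mult. apply Rmult_le_compat_r. apply Rabs_pos. lra. }
    assert (Hz : y - c <> 0) by lra.
    assert (Hpk : (y - c) ^ k <> 0) by (apply pow_nonzero; auto).
    replace ((RInt (fun w : R => (w - c) ^ k * b w) c y / (y - c) ^ S k - b c / INR (S k)) / (y - c) -
        b1 c / INR (S (S k))) with (Rf y / (y - c) ^ S (S k)).
    2:{ unfold Rf, A. cbv beta.
      assert (N1 : INR (S k) <> 0) by (apply not_0_INR; lia).
      assert (N2 : INR (S (S k)) <> 0) by (apply not_0_INR; lia).
      revert N1 N2. generalize (INR (S k)) (INR (S (S k))). intros r1 r2 N1 N2.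
      change ((y - c) ^ S (S k)) with ((y - c) * ((y - c) * (y - c) ^ k)).
      change ((y - c) ^ S k) with ((y - c) * (y - c) ^ k). field. auto. }
    rewrite Hmvt. rewrite Rabs_div by (apply pow_nonzero; auto).
    rewrite !Rabs_mult, <- !RPow_abs.
    assert (Hay : 0 < Rabs (y - c)) by (apply Rabs_pos_lt; auto).
    assert (Hpow : Rabs (xi - c) ^ k <= Rabs (y - c) ^ k) by (apply pow_incr; split; auto; apply Rabs_pos).
    assert (Hpos : 0 < Rabs (y - c) ^ S (S k)) by (apply pow_lt; auto).
    apply Rmult_lt_reg_r with (Rabs (y - c) ^ S (S k)); auto.
    unfold Rdiv. rewrite Rmult_assoc, Rinv_l, Rmult_1_r by lra.
    apply Rle_lt_trans with (Rabs (y - c) ^ k * (e / 2 * Rabs (y - c)) * Rabs (y - c)).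
    { apply Rmult_le_compat_r. apply Rabs_pos. apply Rmult_le_compat; try apply pow_le; try apply Rabs_pos; auto.
      eapply Rle_trans. exact Hbnd. apply Rmult_le_compat_l; lra. }
    simpl. assert (0 < Rabs (y - c) ^ k) by (apply pow_lt; auto).
    assert (0 < Rabs (y - c) * (Rabs (y - c) * Rabs (y - c) ^ k)) by (apply Rmult_lt_0_compat; auto; apply Rmult_lt_0_compat; auto).
    nra.
  - assert (Hid : forall y, lo < y < hi -> INR (S k) * A y + B y = (y - c) ^ S k * b y).
    { intros y Hy.
      set (D := fun y => INR (S k) * A y + B y - (y - c) ^ S k * b y).
      assert (HD : forall y, lo < y < hi -> is_derive D y 0).
      { intros z Hz. unfold D.
        assert (H1 := is_derive_scal _ _ (INR (S k)) _ (HA z Hz)).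
        assert (H2 := d_mult _ _ _ _ _ (d_powc c z k) (Hb z Hz)).
        assert (H3 := d_minus _ _ _ _ _ (d_plus _ _ _ _ _ H1 (HB z Hz)) H2).
        eapply d_eq. exact H3. reflexivity. cbv beta. ring. }
      assert (HDc : D c = 0).
      { unfold D, A, B. rewrite !RInt_point. change (@zero R_CompleteNormedModule) with 0.
        rewrite Rminus_eq_0, pow_i by lia. ring. }
      assert (HDy : D y = D c) by (apply (const_I lo hi); auto). rewrite HDc in HDy. unfold D in HDy. lra. }

    set (r := Rabs (t - c)).
    assert (Hr : 0 < r) by (apply Rabs_pos_lt; lra).
    assert (Hz : t - c <> 0) by lra.
    assert (Hpk : (t - c) ^ k <> 0) by (apply pow_nonzero; auto).
    assert (Hinv := is_derive_inv _ _ _ (d_powc c t k) (pow_nonzero _ (S k) Hz)).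
    assert (H := d_mult _ _ _ _ _ (HA t Ht) Hinv).
    eapply d_eq_loc with (r := r). exact Hr. exact H.
    { intros z Hzt. unfold Pk. destruct (Req_EM_T z c) as [->|_].
      - exfalso. unfold r in Hzt. rewrite <- Rabs_Ropp in Hzt. replace (-(c - t)) with (t - c) in Hzt by ring. lra.
      - reflexivity. }
    unfold Pk. destruct (Req_EM_T t c) as [|_]; [contradiction|].
    fold (B t). assert (HBt : B t = (t - c) ^ S k * b t - INR (S k) * A t) by (rewrite <- (Hid t Ht); ring).
    rewrite HBt.
    assert (N1 : INR (S k) <> 0) by (apply not_0_INR; lia).
    revert N1. generalize (INR (S k)). intros r1 N1.
    change ((t - c) ^ S (S k)) with ((t - c) * ((t - c) * (t - c) ^ k)).
    change ((t - c) ^ S k) with ((t - c) * (t - c) ^ k). field. auto.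
Qed.

Definition Pfam (c : R) (m : nat) (beta : nat -> R -> R) (n : nat) : R -> R :=
  Pk c (m + n) (beta n).

Lemma Pfam_ok (lo hi c : R) (m : nat) (beta : nat -> R -> R) : lo < c < hi ->
  dfam (fun x => lo < x < hi) beta -> dfam (fun x => lo < x < hi) (Pfam c m beta).
Proof.
  intros Hc Hb n x Hx. unfold Pfam. replace (m + S n)%nat with (S (m + n)) by lia.
  apply (Pk_der lo hi c (m + n) (beta n) (beta (S n)) (beta (S (S n)))); auto.

Qed.


Section Prob.
Variables g J S0 ubi u0 : R.
Hypothesis Hg : 1 < g.
Hypothesis HJ : 0 < J.
Hypothesis HS0 : 0 < S0.
Hypothesis Hubi : 0 < ubi.
Hypothesis Hzeta : ubi / u_s g J S0 > 1.
Hypothesis Hu0 : 0 < u0.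
Hypothesis Hu0s : u0 < u_s g J S0.

Definition us := u_s g J S0.
Definition pw (t : R) := Rpower t (g + 1).
Definition h (t : R) := J / (ubi * pw t) * (pw t - pw us) * (ubi - t).
Definition H := H_fun g J S0 ubi.

Lemma us_pos : 0 < us.
Proof. unfold us, u_s. apply Rpower_pos'. Qed.

Lemma us_lt_ubi : us < ubi.
Proof. pose proof us_pos. unfold us in *. apply Rgt_lt in Hzeta.
  apply (Rmult_lt_compat_r (u_s g J S0)) in Hzeta; auto. unfold Rdiv in Hzeta.
  rewrite Rmult_assoc, Rinv_l, Rmult_1_r, Rmult_1_l in Hzeta; lra. Qed.

Lemma pw_pos t : 0 < pw t.
Proof. apply Rpower_pos'. Qed.

Lemma pw_lt a b : 0 < a -> a < b -> pw a < pw b.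
Proof. intros. unfold pw. apply Rlt_Rpower_l; lra. Qed.

Lemma pw_le a b : 0 < a -> a <= b -> pw a <= pw b.
Proof. intros. destruct (Req_dec a b) as [->|]. lra. left; apply pw_lt; lra. Qed.

Lemma pw_split t : 0 < t -> pw t = Rpower t g * t.
Proof. intros. unfold pw. rewrite Rpower_plus, Rpower_1; auto. Qed.

Lemma pw_der t : 0 < t -> is_derive pw t ((g + 1) * Rpower t g).
Proof. intros. apply is_derive_Reals. replace g with (g + 1 - 1) at 2 by ring.
  apply derivable_pt_lim_power; auto. Qed.

Lemma h_der t : 0 < t -> exists l, is_derive h t l.
Proof.
  intros Ht. unfold h. eexists.
  apply d_mult; [apply d_mult|].
  - unfold Rdiv. apply (is_derive_scal (fun t => / (ubi * pw t))). apply is_derive_inv.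
    apply (is_derive_scal pw). apply pw_der; auto. pose proof (pw_pos t). nra.
  - apply d_minus. apply pw_der; auto. apply d_const.
  - apply d_minus. apply d_const. apply d_id.
Qed.

Lemma H_der t : 0 < t -> is_derive H t (h t).
Proof.
  intros Ht. pose proof us_pos.
  apply (ftc_I 0 (t + us + 1) h us); try lra.
  intros x Hx. apply h_der. lra.
Qed.

Lemma H_cont t : 0 < t -> continuity_pt H t.
Proof. intros. apply deriv_contpt with (h t). apply H_der; auto. Qed.

Lemma H_us : H us = 0.
Proof. unfold H, H_fun. fold us. rewrite RInt_point. reflexivity. Qed.

Lemma h_form t : 0 < t -> h t = J / ubi * (1 - pw us / pw t) * (ubi - t).
Proof. intros. unfold h. pose proof (pw_pos t). field. split; lra. Qed.

Lemma h_neg_low t : 0 < t < us -> h t < 0.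
Proof.
  intros Ht. rewrite h_form by lra. pose proof (pw_lt t us ltac:(lra) ltac:(lra)).
  pose proof (pw_pos t). pose proof us_lt_ubi.
  assert (1 - pw us / pw t < 0). { apply (Rmult_lt_reg_r (pw t)); auto. unfold Rdiv. field_simplify; lra. }
  assert (0 < J / ubi) by (apply Rdiv_lt_0_compat; auto).
  assert (J / ubi * (1 - pw us / pw t) < 0) by nra. nra.
Qed.

Lemma h_pos_mid t : us < t < ubi -> 0 < h t.
Proof.
  intros Ht. pose proof us_pos. rewrite h_form by lra. pose proof (pw_lt us t ltac:(lra) ltac:(lra)).
  pose proof (pw_pos t).
  assert (0 < 1 - pw us / pw t). { apply (Rmult_lt_reg_r (pw t)); auto. unfold Rdiv. field_simplify; lra. }
  assert (0 < J / ubi) by (apply Rdiv_lt_0_compat; auto).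
  assert (0 < J / ubi * (1 - pw us / pw t)) by nra. nra.
Qed.

Lemma h_neg_high t : ubi < t -> h t < 0.
Proof.
  intros Ht. pose proof us_pos. pose proof us_lt_ubi. rewrite h_form by lra. pose proof (pw_lt us t ltac:(lra) ltac:(lra)).
  pose proof (pw_pos t).
  assert (0 < 1 - pw us / pw t). { apply (Rmult_lt_reg_r (pw t)); auto. unfold Rdiv. field_simplify; lra. }
  assert (0 < J / ubi) by (apply Rdiv_lt_0_compat; auto).
  assert (0 < J / ubi * (1 - pw us / pw t)) by nra. nra.
Qed.

Lemma h_us : h us = 0.
Proof. unfold h. ring. Qed.

Lemma H_pos_low t : 0 < t < us -> 0 < H t.
Proof.
  intros Ht. rewrite <- H_us. apply (sdec2 H h t us). lra.
  - intros y Hy. split. apply H_der; lra. destruct (Req_dec y us) as [->|]. rewrite h_us; lra. left; apply h_neg_low; lra.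
  - intros y Hy. apply h_neg_low; lra.
Qed.

Lemma h_ubi : h ubi = 0.
Proof. unfold h. ring. Qed.

Lemma H_pos_mid t : us < t <= ubi -> 0 < H t.
Proof.
  intros Ht. pose proof us_pos. rewrite <- H_us. apply (sinc2 H h us t). lra.
  - intros y Hy. split. apply H_der; lra. destruct (Req_dec y us) as [->|]. rewrite h_us; lra.
    destruct (Req_dec y ubi) as [->|]. rewrite h_ubi; lra. left; apply h_pos_mid; lra.
  - intros y Hy. apply h_pos_mid; lra.
Qed.

Lemma H_dec_high a b : ubi <= a < b -> H b < H a.
Proof.
  intros Hab. apply (sdec2 H h a b). lra.
  - intros y Hy. split. apply H_der; lra. destruct (Req_dec y ubi) as [->|]. rewrite h_ubi; lra. left; apply h_neg_high; lra.
  - intros y Hy. apply h_neg_high; lra.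
Qed.

Definition rho := pw us / pw (2 * ubi).

Lemma rho_lt1 : 0 < rho < 1.
Proof.
  pose proof us_pos. pose proof us_lt_ubi. unfold rho. pose proof (pw_pos (2 * ubi)). pose proof (pw_pos us).
  pose proof (pw_lt us (2 * ubi) ltac:(lra) ltac:(lra)). split. apply Rdiv_lt_0_compat; auto.
  apply (Rmult_lt_reg_r (pw (2 * ubi))); auto. unfold Rdiv. rewrite Rmult_assoc, Rinv_l; lra.
Qed.

Lemma h_bound_far t : 2 * ubi <= t -> h t <= - (J * (1 - rho)).
Proof.
  intros Ht. pose proof us_pos. pose proof us_lt_ubi. pose proof rho_lt1. rewrite h_form by lra.
  pose proof (pw_le (2 * ubi) t ltac:(lra) ltac:(lra)). pose proof (pw_pos t). pose proof (pw_pos (2*ubi)).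
  pose proof (pw_pos us).
  assert (Hr : 1 - rho <= 1 - pw us / pw t).
  { unfold rho. assert (pw us / pw t <= pw us / pw (2 * ubi)); [|lra].
    unfold Rdiv. apply Rmult_le_compat_l. lra. apply Rinv_le_contravar; lra. }
  assert (Hj : J / ubi * (ubi - t) <= - J).
  { replace (J / ubi * (ubi - t)) with (J - J * t / ubi) by (field; lra).
    assert (2 * J <= J * t / ubi); [|lra]. apply (Rmult_le_reg_r ubi); auto.
    replace (J * t / ubi * ubi) with (J * t) by (field; lra). nra. }
  replace (J / ubi * (1 - pw us / pw t) * (ubi - t)) with ((1 - pw us / pw t) * (J / ubi * (ubi - t))) by ring.
  nra.
Qed.

Definition Wbig := 2 * ubi + (Rabs (H (2 * ubi)) + 1) / (J * (1 - rho)).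

Lemma H_Wbig : H Wbig < 0 /\ ubi < Wbig.
Proof.
  pose proof rho_lt1. assert (Hc : 0 < J * (1 - rho)) by nra.
  assert (Hq : 0 < (Rabs (H (2 * ubi)) + 1) / (J * (1 - rho))) by (apply Rdiv_lt_0_compat; auto; pose proof (Rabs_pos (H (2 * ubi))); lra).
  split; [|unfold Wbig; lra].
  assert (Hm : H Wbig + J * (1 - rho) * Wbig <= H (2 * ubi) + J * (1 - rho) * (2 * ubi)).
  { apply (mono_deriv (fun w => H w + J * (1 - rho) * w) (fun w => h w + J * (1 - rho))). unfold Wbig; lra.
    intros y Hy. split. apply d_eq with (f := fun w => H w + J * (1 - rho) * w) (l := h y + J * (1 - rho) * 1).
    apply d_plus. apply H_der; lra. apply (is_derive_scal (fun w => w)). apply d_id. auto. ring.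
    pose proof (h_bound_far y ltac:(lra)). lra. }
  unfold Wbig in Hm. rewrite Rmult_plus_distr_l in Hm.
  replace (J * (1 - rho) * ((Rabs (H (2 * ubi)) + 1) / (J * (1 - rho)))) with (Rabs (H (2 * ubi)) + 1) in Hm by (field; lra).
  pose proof (Rle_abs (H (2 * ubi))). unfold Wbig. lra.
Qed.

Definition umax_sig : {z : R | ubi <= z <= Wbig /\ (fun w => - H w) z = 0}.
Proof.
  apply Ranalysis5.IVT_interv.
  - intros a Ha. apply continuity_pt_opp. apply H_cont. lra.
  - apply H_Wbig.
  - pose proof (H_pos_mid ubi). pose proof us_lt_ubi. lra.
  - pose proof H_Wbig. lra.
Defined.

Definition umax := proj1_sig umax_sig.

Lemma umax_prop : ubi < umax /\ H umax = 0.
Proof.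
  unfold umax. destruct umax_sig as [z [Hz1 Hz2]]. simpl. simpl in Hz2.
  destruct (Req_dec z ubi) as [->|]. pose proof (H_pos_mid ubi). pose proof us_lt_ubi. lra. lra.
Qed.

Lemma H_pos t : 0 < t < umax -> t <> us -> 0 < H t.
Proof.
  intros Ht Hne. pose proof umax_prop. destruct (Rlt_le_dec t us). apply H_pos_low; lra.
  destruct (Rle_lt_dec t ubi). apply H_pos_mid; lra.
  assert (H umax < H t) by (apply H_dec_high; lra). lra.
Qed.

Lemma H_neg t : umax < t -> H t < 0.
Proof. intros. pose proof umax_prop. assert (H t < H umax) by (apply H_dec_high; lra). lra. Qed.

Lemma H_nonneg_le t : 0 < t -> 0 <= H t -> t <= umax.
Proof. intros. destruct (Rle_lt_dec t umax); auto. pose proof (H_neg t r). lra. Qed.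

Definition hi0 := umax + 1.

Lemma us_lt_umax : us < umax.
Proof. pose proof us_lt_ubi. pose proof umax_prop. lra. Qed.

Lemma us_in : 0 < us < hi0.
Proof. pose proof us_pos. pose proof us_lt_umax. unfold hi0. lra. Qed.

Definition pwd (n : nat) := pwfam (g + 1) (S n).

Lemma pwd_ok : dfam (fun x => 0 < x < hi0) pwd.
Proof. apply dfam_sub with (fun x => 0 < x). intros n x Hx. apply pwfam_ok. auto. intros x Hx; lra. Qed.

Lemma pwd0 t : pwd 0 t = (g + 1) * Rpower t g.
Proof. unfold pwd, pwfam. replace (g + 1 - INR 1) with g by (simpl; ring).
  replace (prodc (g + 1) 1) with (g + 1) by (simpl; ring). reflexivity. Qed.

Lemma pw_der' t : 0 < t -> is_derive pw t (pwd 0 t).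
Proof. intros. rewrite pwd0. apply pw_der. auto. Qed.

Definition Mfam := Pfam us 0 pwd.
Definition M := Mfam 0.

Lemma Mfam_ok : dfam (fun x => 0 < x < hi0) Mfam.
Proof. apply Pfam_ok. apply us_in. apply pwd_ok. Qed.

Lemma RInt_pw t : 0 < t -> RInt (fun w => (w - us) ^ 0 * pwd 0 w) us t = pw t - pw us.
Proof.
  intros Ht. pose proof us_pos. apply is_RInt_unique.
  apply (is_RInt_derive (V:=R_CompleteNormedModule) pw). 
  - intros x Hx. apply (d_eq pw pw x (pwd 0 x)). apply pw_der'.
    unfold Rmin, Rmax in Hx. destruct (Rle_dec us t); lra. auto. simpl. ring.
  - intros x Hx. apply cont_of_deriv with (pwd 1 x). 
    assert (Hx' : 0 < x) by (unfold Rmin, Rmax in Hx; destruct (Rle_dec us t); lra).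
    apply (d_eq (pwd 0) _ x (pwd 1 x)). apply pwfam_ok. auto. intros; simpl; ring. auto.
Qed.

Lemma M_val t : 0 < t -> t <> us -> M t = (pw t - pw us) / (t - us).
Proof.
  intros Ht Hne. unfold M, Mfam, Pfam, Pk. change (0 + 0)%nat with 0%nat; change (1 + 0)%nat with 1%nat. destruct (Req_EM_T t us); [contradiction|].
  rewrite RInt_pw by auto. replace ((t - us) ^ 1) with (t - us) by ring. reflexivity.
Qed.

Lemma M_us : M us = (g + 1) * Rpower us g.
Proof. unfold M, Mfam, Pfam, Pk. change (0 + 0)%nat with 0%nat; change (1 + 0)%nat with 1%nat. destruct (Req_EM_T us us); [|contradiction].
  rewrite pwd0. simpl. field. Qed.

Lemma M_pos t : 0 < t -> 0 < M t.
Proof.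
  intros Ht. pose proof us_pos. destruct (Req_dec t us) as [->|Hne].
  - rewrite M_us. apply Rmult_lt_0_compat. lra. apply Rpower_pos'.
  - rewrite M_val by auto. destruct (Rlt_le_dec t us).
    + pose proof (pw_lt t us Ht r). apply Rdiv_neg_neg; lra.
    + pose proof (pw_lt us t ltac:(lra) ltac:(lra)). apply Rdiv_lt_0_compat; lra.
Qed.

Lemma Q_M t : 0 < t -> pw t - pw us = (t - us) * M t.
Proof.
  intros Ht. destruct (Req_dec t us) as [->|Hne]. ring.
  rewrite M_val by auto. field. lra.
Qed.

Definition aexpr := EMul (EMul (EAt (cfam (J / ubi))) (EAdd (EAt (cfam ubi)) (EMul (EAt (cfam (-1))) (EAt idfam))))
   (EAt (pwfam (- (g + 1)))).
Definition bexpr := EMul aexpr (EAt Mfam).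

Lemma bexpr_valid : valid (fun x => 0 < x < hi0) bexpr.
Proof.
  unfold bexpr, aexpr. cbn [valid]. repeat match goal with |- _ /\ _ => split end;
  try apply cfam_ok; try apply idfam_ok; try apply Mfam_ok.
  apply dfam_sub with (fun x => 0 < x). apply pwfam_ok. intros; lra.
Qed.

Lemma bexpr_val t : 0 < t -> ev bexpr t = J * (ubi - t) / (ubi * pw t) * M t.
Proof.
  intros Ht. unfold bexpr, aexpr. cbn [ev]. unfold pwfam, cfam, idfam. cbn [prodc INR]. rewrite Rminus_0_r, Rpower_Ropp. fold (pw t). change (Mfam 0 t) with (M t).
  pose proof (pw_pos t). field. split; lra.
Qed.

Lemma h_b t : 0 < t -> h t = (t - us) ^ 1 * ev bexpr t.
Proof.
  intros Ht. rewrite bexpr_val by auto. unfold h. rewrite Q_M by auto. pose proof (pw_pos t). field. split; lra.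
Qed.

Definition bfam (n : nat) := ev (Nat.iter n dr bexpr).
Lemma bfam_ok : dfam (fun x => 0 < x < hi0) bfam.
Proof. apply ex_dfam. apply bexpr_valid. Qed.

Definition Kfam := Pfam us 1 bfam.
Definition K := Kfam 0.
Lemma Kfam_ok : dfam (fun x => 0 < x < hi0) Kfam.
Proof. apply Pfam_ok. apply us_in. apply bfam_ok. Qed.

Lemma K_val t : 0 < t < hi0 -> t <> us -> K t = H t / (t - us) ^ 2.
Proof.
  intros Ht Hne. pose proof us_in. unfold K, Kfam, Pfam, Pk. change (0 + 0)%nat with 0%nat; change (1 + 0)%nat with 1%nat. destruct (Req_EM_T t us); [contradiction|].
  f_equal. unfold H, H_fun. fold us. apply RInt_ext. intros x Hx.
  assert (0 < x) by (unfold Rmin, Rmax in Hx; destruct (Rle_dec us t); lra).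
  change (J / (ubi * Rpower x (g + 1)) * (Rpower x (g + 1) - Rpower us (g + 1)) * (ubi - x)) with (h x).
  rewrite (h_b x) by auto. reflexivity.
Qed.

Lemma K_us : K us = ev bexpr us / 2.
Proof. unfold K, Kfam, Pfam, Pk. change (0 + 0)%nat with 0%nat; change (1 + 0)%nat with 1%nat. destruct (Req_EM_T us us); [|contradiction].
  replace (INR 2) with 2 by (cbn [INR]; ring). reflexivity. Qed.

Lemma K_pos t : 0 < t < umax -> 0 < K t.
Proof.
  intros Ht. pose proof us_in. pose proof us_lt_ubi. destruct (Req_dec t us) as [->|Hne].
  - rewrite K_us, bexpr_val by lra. pose proof (M_pos us ltac:(lra)). pose proof (pw_pos us).
    assert (0 < J * (ubi - us) / (ubi * pw us)). { apply Rdiv_lt_0_compat. nra. nra. }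
    nra.
  - rewrite K_val by (unfold hi0; lra). apply Rdiv_lt_0_compat. apply H_pos; auto.
    destruct (Rlt_le_dec t us); simpl; nra.
Qed.

Definition Iu (x : R) := 0 < x < umax.

Lemma Iu_hi0 x : Iu x -> 0 < x < hi0.
Proof. unfold Iu, hi0. lra. Qed.

Definition sqexpr := EComp (fun y => 0 < y) (pwfam (/ 2)) (EMul (EAt (cfam 2)) (EAt Kfam)).
Definition Sexpr := EMul (EAdd (EAt idfam) (EAt (cfam (- us)))) sqexpr.
Definition Gexpr := EMul (EMul sqexpr (EAt (pwfam g))) (EComp (fun y => 0 < y) (pwfam (-1)) (EAt Mfam)).

Definition Sf (t : R) := (t - us) * sqrt (2 * K t).
Definition Gf (t : R) := sqrt (2 * K t) * Rpower t g / M t.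

Lemma sqexpr_valid : valid Iu sqexpr.
Proof.
  unfold sqexpr. cbn [valid ev]. repeat match goal with |- _ /\ _ => split end.
  - apply pwfam_ok.
  - apply cfam_ok.
  - apply dfam_sub with (fun x => 0 < x < hi0). apply Kfam_ok. apply Iu_hi0.
  - intros x Hx. unfold cfam. pose proof (K_pos x Hx). change (Kfam 0 x) with (K x). lra.
Qed.

Lemma Sexpr_valid : valid Iu Sexpr.
Proof.
  unfold Sexpr. cbn [valid]. split; [split|]. apply idfam_ok. apply cfam_ok. apply sqexpr_valid.
Qed.

Lemma Gexpr_valid : valid Iu Gexpr.
Proof.
  unfold Gexpr. cbn [valid ev]. split; [split|]. apply sqexpr_valid.
  apply dfam_sub with (fun x => 0 < x). apply pwfam_ok. intros x Hx; apply Hx.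
  split. apply pwfam_ok. split. apply dfam_sub with (fun x => 0 < x < hi0). apply Mfam_ok. apply Iu_hi0.
  intros x Hx. apply M_pos. apply Hx.
Qed.

Lemma sqexpr_val t : Iu t -> ev sqexpr t = sqrt (2 * K t).
Proof.
  intros Ht. unfold sqexpr. cbn [ev]. unfold pwfam, cfam. cbn [prodc INR]. change (Kfam 0 t) with (K t).
  rewrite Rminus_0_r, Rmult_1_l. apply Rpower_sqrt. pose proof (K_pos t Ht). lra.
Qed.

Lemma Sexpr_val t : Iu t -> Sf t = ev Sexpr t.
Proof.
  intros Ht. unfold Sexpr. cbn [ev]. rewrite sqexpr_val by auto. unfold idfam, cfam, Sf. ring.
Qed.

Lemma Gexpr_val t : Iu t -> Gf t = ev Gexpr t.
Proof.
  intros Ht. unfold Gexpr. cbn [ev]. rewrite sqexpr_val by auto. unfold pwfam. cbn [prodc INR].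
  change (Mfam 0 t) with (M t). rewrite !Rminus_0_r, !Rmult_1_l.
  replace (Rpower (M t) (-1)) with (Rpower (M t) (-(1))) by (f_equal; ring). rewrite Rpower_Ropp, Rpower_1.
  unfold Gf. field. pose proof (M_pos t ltac:(unfold Iu in Ht; lra)). lra. apply M_pos. unfold Iu in Ht; lra.
Qed.

Lemma S_der t : Iu t -> is_derive Sf t (ev (dr Sexpr) t).
Proof. intros Ht. apply (ev_der_eq 0 umax). apply Sexpr_valid. intros; apply Sexpr_val; auto. auto. Qed.

Lemma G_der t : Iu t -> is_derive Gf t (ev (dr Gexpr) t).
Proof. intros Ht. apply (ev_der_eq 0 umax). apply Gexpr_valid. intros; apply Gexpr_val; auto. auto. Qed.

Lemma G_pos t : Iu t -> 0 < Gf t.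
Proof.
  intros Ht. unfold Gf. pose proof (K_pos t Ht). pose proof (M_pos t ltac:(unfold Iu in Ht; lra)).
  apply Rdiv_lt_0_compat; auto. apply Rmult_lt_0_compat. apply sqrt_lt_R0. lra. apply Rpower_pos'.
Qed.

Lemma SS t : Iu t -> Sf t * Sf t = 2 * H t.
Proof.
  intros Ht. pose proof (K_pos t Ht). unfold Sf. destruct (Req_dec t us) as [->|Hne].
  - rewrite H_us. ring.
  - replace ((t - us) * sqrt (2 * K t) * ((t - us) * sqrt (2 * K t))) with ((t - us) ^ 2 * (sqrt (2 * K t) * sqrt (2 * K t))) by ring.
    rewrite sqrt_sqrt by lra. rewrite K_val by (auto; apply Iu_hi0; auto). field.
    intros Hc. simpl in Hc. destruct (Rlt_le_dec t us); [nra|]. destruct r; [nra|]. apply Hne; lra.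
Qed.

Lemma S_sign t : Iu t -> t <> us -> 0 < (t - us) * Sf t.
Proof.
  intros Ht Hne. unfold Sf. pose proof (K_pos t Ht). assert (0 < sqrt (2 * K t)) by (apply sqrt_lt_R0; lra).
  replace ((t - us) * ((t - us) * sqrt (2 * K t))) with ((t - us) * (t - us) * sqrt (2 * K t)) by ring.
  apply Rmult_lt_0_compat; auto. destruct (Rlt_le_dec t us); nra.
Qed.

Lemma G_S t : Iu t -> t <> us -> Gf t = Sf t * Rpower t g / (pw t - pw us).
Proof.
  intros Ht Hne. unfold Iu in Ht. rewrite Q_M by lra. unfold Gf, Sf. field. split.
  pose proof (M_pos t ltac:(lra)). lra. lra.
Qed.

Lemma h_alg t : 0 < t -> t <> us -> h t * Rpower t g / (pw t - pw us) = J / t - J / ubi.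
Proof.
  intros Ht Hne. unfold h. rewrite (pw_split t) by auto. pose proof (Rpower_pos' t g).
  assert (pw t - pw us <> 0).
  { destruct (Rlt_le_dec t us). pose proof (pw_lt t us Ht r). lra.
    pose proof us_pos. pose proof (pw_lt us t ltac:(lra) ltac:(lra)). lra. }
  field. rewrite <- pw_split by auto. repeat split; lra.
Qed.

Definition Sd := ev (dr Sexpr).

Lemma Sd_der t : Iu t -> is_derive Sd t (ev (dr (dr Sexpr)) t).
Proof. intros Ht. destruct (dr_ok Iu (dr Sexpr) (proj1 (dr_ok Iu Sexpr Sexpr_valid))) as [_ Hd]. apply Hd; auto. Qed.

Lemma Iu_ball t : Iu t -> forall z, Rabs (z - t) < Rmin t (umax - t) -> Iu z.
Proof.
  intros Ht z Hz. unfold Iu in *. assert (Rmin t (umax - t) <= t) by apply Rmin_l.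
  assert (Rmin t (umax - t) <= umax - t) by apply Rmin_r. apply Rabs_lt_between in Hz. lra.
Qed.

Lemma Iu_r t : Iu t -> 0 < Rmin t (umax - t).
Proof. unfold Iu; intros; apply Rmin_pos; lra. Qed.

Lemma SSd t : Iu t -> Sf t * Sd t = h t.
Proof.
  intros Ht. assert (H1 := d_mult Sf Sf t _ _ (S_der t Ht) (S_der t Ht)).
  assert (H2 : is_derive (fun x => 2 * H x) t (2 * h t)).
  { apply (is_derive_scal H). apply H_der. unfold Iu in Ht; lra. }
  assert (H3 : is_derive (fun x => Sf x * Sf x) t (2 * h t)).
  { apply (d_eq_loc (fun x => 2 * H x) _ t (2 * h t) _ (Rmin t (umax - t))). apply Iu_r; auto. auto.
    intros z Hz. symmetry. apply SS. apply (Iu_ball t Ht z Hz). reflexivity. }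
  apply is_derive_unique in H1. apply is_derive_unique in H3. rewrite H1 in H3. fold Sd in H3. lra.
Qed.

Lemma d_Jinv (x : R) : x <> 0 -> is_derive (fun y => J / y) x (J * (- 1 / x ^ 2)).
Proof. intros Hx. unfold Rdiv. apply (is_derive_scal (fun y => / y)). apply is_derive_inv. apply d_id. auto. Qed.

Lemma SdG t : Iu t -> Sd t * Gf t = J / t - J / ubi.
Proof.
  intros Ht. destruct (Req_dec t us) as [->|Hne].
  - set (phi := fun x => Sd x * Gf x - (J / x - J / ubi)).
    assert (Hz : phi us = 0).
    { pose proof us_pos.
      assert (Hd : exists l, is_derive phi us l).
      { eexists. unfold phi. apply d_minus. apply d_mult. apply Sd_der; auto. apply G_der; auto.
        apply d_minus. apply d_Jinv. lra. apply d_const. }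
      destruct Hd as [l Hl].
      apply (cont_zero phi us l (Rmin us (umax - us))). auto.
      + apply Iu_r; auto.
      + intros x Hx Hxr. assert (Ix : Iu x) by (apply (Iu_ball us Ht x Hxr)).
        unfold phi. assert (Hsx : Sf x <> 0) by (pose proof (S_sign x Ix Hx) as Hs; intros Hc; rewrite Hc in Hs; lra).
        assert (Hsd : Sd x = h x / Sf x) by (rewrite <- (SSd x Ix); field; auto).
        rewrite Hsd, G_S by auto. rewrite <- (h_alg x) by (unfold Iu in Ix; lra || auto). field.
        split; auto. intros Hq. destruct (Rlt_le_dec x us).
        pose proof (pw_lt x us ltac:(unfold Iu in Ix; lra) r). lra.
        pose proof (pw_lt us x ltac:(lra) ltac:(lra)). lra. }
    unfold phi in Hz. lra.
  - assert (Hsx : Sf t <> 0) by (pose proof (S_sign t Ht Hne) as Hs; intros Hc; rewrite Hc in Hs; lra).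
    assert (Hsd : Sd t = h t / Sf t) by (rewrite <- (SSd t Ht); field; auto).
    rewrite Hsd, G_S by auto. rewrite <- (h_alg t) by (unfold Iu in Ht; lra || auto). field.
    split; auto. intros Hq. destruct (Rlt_le_dec t us).
    pose proof (pw_lt t us ltac:(unfold Iu in Ht; lra) r). lra.
    pose proof us_pos. pose proof (pw_lt us t ltac:(lra) ltac:(lra)). lra.
Qed.

Lemma u0_Iu : Iu u0.
Proof. unfold Iu. pose proof us_lt_umax. fold us in Hu0s. lra. Qed.

Lemma us_Iu : Iu us.
Proof. unfold Iu. pose proof us_lt_umax. pose proof us_pos. lra. Qed.

Lemma invG_der t : Iu t -> is_derive (fun x => / Gf x) t (- ev (dr Gexpr) t / Gf t ^ 2).
Proof. intros Ht. apply is_derive_inv. apply G_der; auto. pose proof (G_pos t Ht). lra. Qed.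

Definition X (w : R) : R := RInt (fun t => / Gf t) u0 w.

Lemma X_der w : Iu w -> is_derive X w (/ Gf w).
Proof.
  intros Hw. apply (ftc_I 0 umax (fun t => / Gf t) u0). intros x Hx. eexists. apply invG_der. exact Hx.
  apply u0_Iu. exact Hw.
Qed.

Lemma X_u0 : X u0 = 0.
Proof. unfold X. rewrite RInt_point. reflexivity. Qed.

Lemma X_inc a b : Iu a -> Iu b -> a < b -> X a < X b.
Proof.
  intros Ha Hb Hab. apply (sinc2 X (fun t => / Gf t)); auto.
  - intros y Hy. assert (Iu y) by (unfold Iu in *; lra). split. apply X_der; auto.
    left. apply Rinv_0_lt_compat. apply G_pos; auto.
  - intros y Hy. assert (Iu y) by (unfold Iu in *; lra). apply Rinv_0_lt_compat. apply G_pos; auto.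
Qed.

Lemma X_lt_iff a b : Iu a -> Iu b -> (X a < X b <-> a < b).
Proof.
  intros Ha Hb. split; intros H0. destruct (Rlt_le_dec a b); auto. destruct r. pose proof (X_inc b a Hb Ha H1). lra.
  subst. lra. apply X_inc; auto.
Qed.

Lemma X_inj a b : Iu a -> Iu b -> X a = X b -> a = b.
Proof.
  intros Ha Hb Heq. destruct (Rtotal_order a b) as [Hl|[He|Hl]]; auto.
  pose proof (X_inc a b Ha Hb Hl); lra. pose proof (X_inc b a Hb Ha Hl); lra.
Qed.

Lemma X_cont w : Iu w -> continuity_pt X w.
Proof. intros. apply deriv_contpt with (/ Gf w). apply X_der; auto. Qed.

Definition w1 := (ubi + umax) / 2.
Definition beta1 := 1 - pw us / pw w1.
Definition alpha := (w1 - ubi) / ubi.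
Definition mm := J * beta1 * alpha.

Lemma w1_prop : ubi < w1 < umax.
Proof. unfold w1. pose proof umax_prop. lra. Qed.

Lemma mm_pos : 0 < mm.
Proof.
  pose proof w1_prop. pose proof us_lt_ubi. pose proof us_pos. unfold mm, beta1, alpha.
  pose proof (pw_lt us w1 ltac:(lra) ltac:(lra)). pose proof (pw_pos w1).
  assert (0 < 1 - pw us / pw w1). { apply (Rmult_lt_reg_r (pw w1)); auto. unfold Rdiv. field_simplify; lra. }
  assert (0 < (w1 - ubi) / ubi) by (apply Rdiv_lt_0_compat; lra).
  apply Rmult_lt_0_compat; auto. apply Rmult_lt_0_compat; auto.
Qed.

Lemma h_le_mm t : w1 <= t -> h t <= - mm.
Proof.
  intros Ht. pose proof w1_prop. pose proof us_lt_ubi. pose proof us_pos.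
  rewrite h_form by lra. unfold mm, beta1, alpha.
  pose proof (pw_le w1 t ltac:(lra) ltac:(lra)). pose proof (pw_pos t). pose proof (pw_pos w1). pose proof (pw_pos us).
  assert (Hr : 1 - pw us / pw w1 <= 1 - pw us / pw t).
  { assert (pw us / pw t <= pw us / pw w1); [|lra].
    unfold Rdiv. apply Rmult_le_compat_l. lra. apply Rinv_le_contravar; lra. }
  assert (Hb0 : 0 < 1 - pw us / pw w1). { apply (Rmult_lt_reg_r (pw w1)); auto. unfold Rdiv. field_simplify; try lra.
    pose proof (pw_lt us w1 ltac:(lra) ltac:(lra)). lra. }
  assert (Ha : (ubi - t) / ubi <= - ((w1 - ubi) / ubi)).
  { replace (- ((w1 - ubi) / ubi)) with ((ubi - w1) / ubi) by (field; lra).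
    unfold Rdiv. apply Rmult_le_compat_r. left; apply Rinv_0_lt_compat; lra. lra. }
  assert (Ha0 : 0 < (w1 - ubi) / ubi) by (apply Rdiv_lt_0_compat; lra).
  replace (J / ubi * (1 - pw us / pw t) * (ubi - t)) with (J * ((1 - pw us / pw t) * ((ubi - t) / ubi))) by (field; lra).
  replace (- (J * (1 - pw us / pw w1) * ((w1 - ubi) / ubi))) with (J * ((1 - pw us / pw w1) * (- ((w1 - ubi) / ubi)))) by ring.
  apply Rmult_le_compat_l. lra. nra.
Qed.

Lemma H_lower w : w1 <= w <= umax -> mm * (umax - w) <= H w.
Proof.
  intros Hw. pose proof w1_prop. pose proof umax_prop.
  assert (Hm : H umax - mm * (umax - umax) <= H w - mm * (umax - w)).
  { apply (mono_deriv (fun x => H x - mm * (umax - x)) (fun x => h x + mm)). lra.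
    intros y Hy. split.
    - apply (d_eq (fun x => H x - mm * (umax - x)) _ y (h y - mm * (0 - 1))). apply d_minus. apply H_der. lra.
      apply (is_derive_scal (fun x => umax - x)). apply d_minus. apply d_const. apply d_id. auto. ring.
    - pose proof (h_le_mm y ltac:(lra)). lra. }
  destruct umax_prop as [_ Hu]. rewrite Hu in Hm. lra.
Qed.

Lemma S_sqrtH t : Iu t -> us < t -> Sf t = sqrt (2 * H t).
Proof.
  intros Ht Hus. symmetry. apply sqrt_lem_1. pose proof (H_pos t Ht ltac:(lra)). lra.
  pose proof (S_sign t Ht ltac:(lra)). assert (0 < Sf t) by nra. lra. apply SS; auto.
Qed.

Definition Cc := (pw umax - pw us) / (sqrt (2 * mm) * Rpower w1 g).

Lemma invG_bound w : w1 <= w < umax -> / Gf w <= Cc / sqrt (umax - w).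
Proof.
  intros Hw. pose proof w1_prop. pose proof us_lt_ubi. pose proof us_pos. pose proof mm_pos.
  assert (Iw : Iu w) by (unfold Iu; lra).
  rewrite G_S by (auto; lra). rewrite S_sqrtH by (auto; lra).
  assert (HQ : 0 < pw w - pw us) by (pose proof (pw_lt us w ltac:(lra) ltac:(lra)); lra).
  assert (HQ2 : pw w - pw us <= pw umax - pw us) by (pose proof (pw_le w umax ltac:(lra) ltac:(lra)); lra).
  assert (HP : Rpower w1 g <= Rpower w g) by (apply Rle_Rpower_l; lra).
  assert (HP0 : 0 < Rpower w1 g) by apply Rpower_pos'.
  assert (Hs1 : sqrt (2 * mm) * sqrt (umax - w) <= sqrt (2 * H w)).
  { rewrite <- sqrt_mult_alt by lra. apply sqrt_le_1_alt. pose proof (H_lower w ltac:(lra)). nra. }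
  assert (Hs0 : 0 < sqrt (2 * mm) * sqrt (umax - w)).
  { apply Rmult_lt_0_compat; apply sqrt_lt_R0; lra. }
  assert (0 < sqrt (2 * mm)) by (apply sqrt_lt_R0; lra).
  assert (0 < sqrt (umax - w)) by (apply sqrt_lt_R0; lra).
  assert (0 < sqrt (2 * H w)) by lra.
  unfold Cc. rewrite Rinv_div.
  apply Rle_trans with ((pw umax - pw us) / (sqrt (2 * mm) * sqrt (umax - w) * Rpower w1 g)).
  - unfold Rdiv. apply Rmult_le_compat. lra. left; apply Rinv_0_lt_compat.
    apply Rmult_lt_0_compat; auto. apply Rpower_pos'. auto.
    apply Rinv_le_contravar. apply Rmult_lt_0_compat; auto. apply Rmult_le_compat; lra.
  - right. field. repeat split; lra.
Qed.

Lemma X_bound w : u0 <= w < umax -> X w <= X w1 + 2 * Cc * sqrt (umax - w1).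
Proof.
  intros Hw. pose proof w1_prop. pose proof u0_Iu. pose proof us_lt_ubi. fold us in Hu0s.
  assert (0 <= Cc).
  { unfold Cc. pose proof us_pos. pose proof mm_pos. apply Rdiv_le_0_compat.
    pose proof (pw_lt us umax ltac:(lra) ltac:(lra)). lra. apply Rmult_lt_0_compat. apply sqrt_lt_R0; lra. apply Rpower_pos'. }
  destruct (Rle_lt_dec w w1).
  - destruct (Req_dec w w1) as [->|]. pose proof (sqrt_pos (umax - w1)). nra.
    left. pose proof (X_inc w w1 ltac:(unfold Iu in *; lra) ltac:(unfold Iu; lra) ltac:(lra)).
    pose proof (sqrt_pos (umax - w1)). nra.
  - assert (Hm : X w + 2 * Cc * sqrt (umax - w) <= X w1 + 2 * Cc * sqrt (umax - w1)).
    { apply (mono_deriv (fun x => X x + 2 * Cc * sqrt (umax - x)) (fun x => / Gf x - Cc / sqrt (umax - x))). lra.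
      intros y Hy. split.
      - apply (d_eq (fun x => X x + 2 * Cc * sqrt (umax - x)) _ y (/ Gf y + 2 * Cc * ((0 - 1) * / (2 * sqrt (umax - y))))).
        apply d_plus. apply X_der. unfold Iu; lra.
        apply (is_derive_scal (fun x => sqrt (umax - x))).
        apply (d_eq (fun x => sqrt (umax - x)) _ y (/ (2 * sqrt (umax - y)) * (0 - 1))). 
        apply (d_comp sqrt (fun x => umax - x)). apply is_derive_Reals. apply derivable_pt_lim_sqrt. lra.
        apply d_minus. apply d_const. apply d_id. auto. ring. auto.
        assert (0 < sqrt (umax - y)) by (apply sqrt_lt_R0; lra). field. split. lra.
        pose proof (G_pos y ltac:(unfold Iu; lra)). lra.
      - pose proof (invG_bound y ltac:(lra)). lra. }
    pose proof (sqrt_pos (umax - w)). nra.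
Qed.

Definition Eset (y : R) := exists w, u0 <= w < umax /\ y = X w.

Definition lmax_sig : {m : R | is_lub Eset m}.
Proof.
  apply completeness.
  - exists (X w1 + 2 * Cc * sqrt (umax - w1)). intros y [w [Hw ->]]. apply X_bound; auto.
  - exists (X u0). exists u0. split; auto. pose proof u0_Iu. unfold Iu in H0. lra.
Defined.

Definition lmax := proj1_sig lmax_sig.

Lemma X_lt_lmax w : u0 <= w < umax -> X w < lmax.
Proof.
  intros Hw. unfold lmax. destruct lmax_sig as [m [Hm1 Hm2]]. simpl.
  set (w' := (w + umax) / 2). pose proof u0_Iu.
  assert (X w < X w') by (apply X_inc; unfold Iu in *; unfold w'; lra).
  assert (X w' <= m) by (apply Hm1; exists w'; split; auto; unfold w'; lra). lra.
Qed.

Lemma lmax_approx e : 0 < e -> exists w, u0 <= w < umax /\ lmax - e < X w.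
Proof.
  intros He. unfold lmax. destruct lmax_sig as [m [Hm1 Hm2]]. simpl. apply NNPP. intros Hn.
  assert (m <= m - e); [|lra]. apply Hm2. intros y [w [Hw ->]].
  destruct (Rle_lt_dec (X w) (m - e)); auto. exfalso. apply Hn. exists w. split; auto.
Qed.

Lemma lmax_pos : 0 < lmax.
Proof. rewrite <- X_u0. apply X_lt_lmax. pose proof u0_Iu. unfold Iu in H0. lra. Qed.

Definition Xa := X (u0 / 2).

Lemma half_Iu : Iu (u0 / 2).
Proof. pose proof u0_Iu. unfold Iu in *. lra. Qed.

Lemma X_lt_lmax' w : Iu w -> X w < lmax.
Proof.
  intros Hw. destruct (Rle_lt_dec u0 w). apply X_lt_lmax. unfold Iu in Hw; lra.
  pose proof (X_inc w u0 Hw u0_Iu r). rewrite X_u0 in H0. pose proof lmax_pos. lra.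
Qed.

Lemma Xa_neg : Xa < 0.
Proof. unfold Xa. rewrite <- X_u0. apply X_inc. apply half_Iu. apply u0_Iu. lra. Qed.

Lemma inv_exists x : Xa < x < lmax -> exists w, u0 / 2 < w < umax /\ X w = x.
Proof.
  intros Hx. destruct (lmax_approx (lmax - x) ltac:(lra)) as [ws [Hws Hws2]].
  assert (Hlt : u0 / 2 < ws) by lra.
  destruct (Ranalysis5.IVT_interv (fun w => X w - x) (u0 / 2) ws) as [z [Hz1 Hz2]].
  - intros a Ha. apply continuity_pt_minus. apply X_cont. unfold Iu; lra. apply continuity_pt_const. intros ? ?; auto.
  - auto.
  - unfold Xa in Hx. lra.
  - lra.
  - exists z. destruct (Req_dec z (u0 / 2)) as [->|Hne]. unfold Xa in Hx. lra. split. lra. lra.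
Qed.

Definition uf (x : R) : R :=
  match Rlt_dec x lmax with
  | left _ => epsilon (inhabits 0) (fun w => u0 / 2 < w < umax /\ X w = x)
  | right _ => umax end.

Lemma uf_spec x : Xa < x < lmax -> u0 / 2 < uf x < umax /\ X (uf x) = x.
Proof.
  intros Hx. unfold uf. destruct (Rlt_dec x lmax) as [_|]; [|lra].
  apply epsilon_spec. apply inv_exists. auto.
Qed.

Lemma uf_Iu x : Xa < x < lmax -> Iu (uf x).
Proof. intros Hx. destruct (uf_spec x Hx). unfold Iu. pose proof u0_Iu. unfold Iu in H1. lra. Qed.

Lemma Xa_lt w : Iu w -> u0 / 2 < w -> Xa < X w.
Proof. intros. apply X_inc; auto. apply half_Iu. Qed.

Lemma uf_X w : Iu w -> u0 / 2 < w -> uf (X w) = w.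
Proof.
  intros Hw Hw2. assert (Hx : Xa < X w < lmax) by (split; [apply Xa_lt|apply X_lt_lmax']; auto).
  destruct (uf_spec _ Hx) as [H1 H2]. apply X_inj; auto. unfold Iu in *; lra.
Qed.

Lemma uf_lmax : uf lmax = umax.
Proof. unfold uf. destruct (Rlt_dec lmax lmax); [lra|auto]. Qed.

Lemma uf_der x : Xa < x < lmax -> is_derive uf x (Gf (uf x)).
Proof.
  intros Hx. destruct (uf_spec x Hx) as [Hw HXw]. set (w := uf x) in *.
  assert (Iw : Iu w) by (apply uf_Iu; auto).
  set (d := / Gf w). assert (Hd : 0 < d) by (apply Rinv_0_lt_compat; apply G_pos; auto).
  assert (HG : Gf w = / d) by (unfold d; rewrite Rinv_inv; auto).
  apply deriv_eps. intros e He.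
  set (eta := Rmin (d / 2) (e * d * d / 2)).
  assert (Heta : 0 < eta) by (apply Rmin_pos; [lra| apply Rdiv_lt_0_compat; [|lra]; apply Rmult_lt_0_compat; [apply Rmult_lt_0_compat|]; auto]).
  destruct (proj1 (deriv_eps _ _ _) (X_der w Iw) eta Heta) as [r0 [Hr0 HX]].
  set (rr := Rmin (r0 / 2) (Rmin ((w - u0 / 2) / 2) ((umax - w) / 2))).
  assert (Hrr : 0 < rr) by (apply Rmin_pos; [lra|apply Rmin_pos; lra]).
  assert (Hrr1 : rr <= r0 / 2) by apply Rmin_l.
  assert (Hrr2 : rr <= (w - u0 / 2) / 2) by (eapply Rle_trans; [apply Rmin_r|apply Rmin_l]).
  assert (Hrr3 : rr <= (umax - w) / 2) by (eapply Rle_trans; [apply Rmin_r|apply Rmin_r]).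
  assert (Iwp : Iu (w + rr)) by (unfold Iu in *; lra).
  assert (Iwm : Iu (w - rr)) by (pose proof u0_Iu; unfold Iu in *; lra).
  assert (Hp : x < X (w + rr)) by (rewrite <- HXw; apply X_inc; auto; lra).
  assert (Hm : X (w - rr) < x) by (rewrite <- HXw; apply X_inc; auto; lra).
  exists (Rmin (X (w + rr) - x) (x - X (w - rr))). split. apply Rmin_pos; lra.
  intros y Hyx Hyd.
  assert (Hy1 : X (w - rr) < y < X (w + rr)).
  { apply Rabs_lt_between in Hyd. assert (Rmin (X (w + rr) - x) (x - X (w - rr)) <= X (w + rr) - x) by apply Rmin_l.
    assert (Rmin (X (w + rr) - x) (x - X (w - rr)) <= x - X (w - rr)) by apply Rmin_r. lra. }
  assert (Hy2 : Xa < y < lmax).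
  { assert (Xa < X (w - rr)) by (apply Xa_lt; auto; lra).
    assert (X (w + rr) < lmax) by (apply X_lt_lmax'; auto). lra. }
  destruct (uf_spec y Hy2) as [Hv HXv]. set (v := uf y) in *.
  assert (Iv : Iu v) by (apply uf_Iu; auto).
  assert (Hvr : w - rr < v < w + rr).
  { split. apply (X_lt_iff (w - rr) v Iwm Iv). lra. apply (X_lt_iff v (w + rr) Iv Iwp). lra. }
  assert (Hvw : v <> w) by (intros Hc; rewrite Hc in HXv; lra).
  assert (Hvw2 : Rabs (v - w) < r0) by (apply Rabs_def1; lra).
  specialize (HX v Hvw Hvw2). rewrite HXv, HXw in HX.
  set (q := (y - x) / (v - w)) in *.
  assert (Hq1 : Rabs (q - d) < d / 2) by (eapply Rlt_le_trans; [apply HX|apply Rmin_l]).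
  assert (Hq2 : Rabs (q - d) < e * d * d / 2) by (eapply Rlt_le_trans; [apply HX|apply Rmin_r]).
  assert (Hq : d / 2 < q) by (apply Rabs_lt_between in Hq1; lra).
  change (uf x) with w. replace ((v - w) / (y - x)) with (/ q) by (unfold q; field; split; lra).
  rewrite HG. replace (/ q - / d) with ((d - q) / (q * d)) by (field; lra).
  rewrite Rabs_div by nra. rewrite Rabs_right with (r := q * d) by nra.
  rewrite <- Rabs_Ropp. replace (- (d - q)) with (q - d) by ring.
  apply Rmult_lt_reg_r with (q * d). nra. unfold Rdiv. rewrite Rmult_assoc, Rinv_l, Rmult_1_r by nra.
  assert (d * d / 2 < q * d) by nra. assert (e * (d * d / 2) < e * (q * d)) by (apply Rmult_lt_compat_l; auto). lra.
Qed.

Definition Ix (x : R) := Xa < x < lmax.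

Lemma Ico_Ix x : Ico 0 lmax x -> Ix x.
Proof. unfold Ico, Ix. pose proof Xa_neg. lra. Qed.

Definition Gfam (n : nat) := ev (Nat.iter n dr Gexpr).
Definition Sfam (n : nat) := ev (Nat.iter n dr Sexpr).
Definition Uexpr := EVar uf Iu Gfam.
Definition Ef (x : R) := Sf (uf x).
Definition Eexpr := EComp Iu Sfam Uexpr.

Lemma Uexpr_valid : valid Ix Uexpr.
Proof.
  unfold Uexpr. cbn [valid]. split. apply ex_dfam. apply Gexpr_valid.
  intros x Hx. split. apply uf_Iu; auto. unfold Gfam. cbn [Nat.iter].
  rewrite <- Gexpr_val by (apply uf_Iu; auto). apply uf_der; auto.
Qed.

Lemma Eexpr_valid : valid Ix Eexpr.
Proof.
  unfold Eexpr. cbn [valid]. split. apply ex_dfam. apply Sexpr_valid. split. apply Uexpr_valid.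
  intros x Hx. apply uf_Iu; auto.
Qed.

Lemma smooth_from (e : ex) (f : R -> R) : valid Ix e -> (forall x, Ix x -> ev e x = f x) ->
  smooth_on (Ico 0 lmax) f.
Proof.
  intros Hv Hf. exists (fun n => ev (Nat.iter n dr e)). split.
  - intros x Hx. apply Hf. apply Ico_Ix; auto.
  - intros n x Hx. apply deriv_within. apply (ex_dfam Ix e Hv n x). apply Ico_Ix; auto.
Qed.

Lemma smooth_uf : smooth_on (Ico 0 lmax) uf.
Proof. apply (smooth_from Uexpr). apply Uexpr_valid. intros; reflexivity. Qed.

Lemma smooth_Ef : smooth_on (Ico 0 lmax) Ef.
Proof. apply (smooth_from Eexpr). apply Eexpr_valid. intros x Hx. unfold Eexpr, Ef. cbn [ev]. unfold Sfam. cbn [Nat.iter].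
  symmetry. apply Sexpr_val. apply uf_Iu; auto. Qed.

Lemma uf0 : uf 0 = u0.
Proof. rewrite <- X_u0. apply uf_X. apply u0_Iu. lra. Qed.

Lemma uf_pos x : Ix x -> 0 < uf x.
Proof. intros Hx. pose proof (uf_Iu x Hx). unfold Iu in H0. lra. Qed.

Lemma u_eq x : Ix x -> uf x <> us ->
  is_derive uf x (Ef x * Rpower (uf x) g / (Rpower (uf x) (g + 1) - Rpower us (g + 1))).
Proof.
  intros Hx Hne. unfold Ef. fold (pw (uf x)). fold (pw us). rewrite <- G_S by (auto; apply uf_Iu; auto).
  apply uf_der; auto.
Qed.

Lemma E_eq x : Ix x -> is_derive Ef x (J / uf x - J / ubi).
Proof.
  intros Hx. unfold Ef. rewrite <- SdG by (apply uf_Iu; auto).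
  apply d_comp. apply S_der. apply uf_Iu; auto. apply uf_der; auto.
Qed.

Lemma E0_val E0 : T_acc g J S0 ubi u0 E0 -> E0 = Sf u0.
Proof.
  intros [_ [HT1 HT2]]. fold us in HT2. change (H_fun g J S0 ubi u0) with (H u0) in HT1.
  pose proof (SS u0 u0_Iu). pose proof (S_sign u0 u0_Iu ltac:(fold us in Hu0s; lra)).
  fold us in Hu0s.
  assert (HE0 : E0 <= 0) by nra. assert (HS : Sf u0 < 0) by nra.
  assert (E0 * E0 = Sf u0 * Sf u0) by (simpl in HT1; nra).
  nra.
Qed.

Lemma exist_sol E0 : T_acc g J S0 ubi u0 E0 -> is_solution g J S0 ubi u0 E0 lmax uf Ef.
Proof.
  intros HT. unfold is_solution. fold us.
  split. apply smooth_uf. split. apply smooth_Ef. split.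
  { intros x Hx. apply uf_pos. apply Ico_Ix. auto. }
  split. apply uf0. split. { unfold Ef. rewrite uf0. symmetry. apply E0_val; auto. }
  split. { intros x Hx Hne. apply u_eq; auto. apply Ico_Ix. unfold Ico; lra. }
  intros x Hx. apply E_eq. apply Ico_Ix. unfold Ico; lra.
Qed.

Lemma sqrtH_small e : 0 < e -> exists r, 0 < r /\ forall w, umax - r < w < umax -> us < w /\ sqrt (2 * H w) < e.
Proof.
  intros He. pose proof umax_prop as [Hu1 Hu2]. pose proof us_lt_umax.
  destruct (deriv_cont H umax (h umax) (H_der umax ltac:(lra)) (e * e / 2) ltac:(nra)) as [r0 [Hr0 H1]].
  exists (Rmin r0 (umax - us)). split. apply Rmin_pos; lra. intros w Hw.
  assert (Rmin r0 (umax - us) <= r0) by apply Rmin_l. assert (Rmin r0 (umax - us) <= umax - us) by apply Rmin_r.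
  split. lra. specialize (H1 w ltac:(rewrite Rabs_left; lra)). rewrite Hu2, Rminus_0_r in H1.
  assert (0 < H w) by (apply H_pos; [pose proof us_pos; lra| lra]).
  rewrite Rabs_right in H1 by lra. rewrite <- (sqrt_square e) by lra. apply sqrt_lt_1_alt. lra.
Qed.

Lemma X_le a b : Iu a -> Iu b -> a <= b -> X a <= X b.
Proof. intros Ha Hb Hab. destruct Hab. left; apply X_inc; auto. subst; lra. Qed.

Lemma uf_near r : 0 < r -> exists d, 0 < d /\ forall y, lmax - d < y < lmax -> Ix y /\ umax - r < uf y < umax.
Proof.
  intros Hr. pose proof u0_Iu. set (ws := Rmax u0 (umax - r / 2)).
  assert (Hws : u0 <= ws < umax) by (unfold ws, Rmax; unfold Iu in *; destruct (Rle_dec u0 (umax - r / 2)); lra).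
  assert (Iws : Iu ws) by (unfold Iu in *; lra).
  pose proof (X_lt_lmax ws Hws).
  exists (lmax - X ws). split. lra. intros y Hy.
  assert (X u0 <= X ws) by (apply X_le; auto; lra). rewrite X_u0 in H2. pose proof Xa_neg.
  assert (Iy : Ix y) by (unfold Ix; lra). split; auto.
  destruct (uf_spec y Iy) as [H4 H5]. split; [|lra].
  assert (ws < uf y). { apply (X_lt_iff ws (uf y) Iws). apply uf_Iu; auto. lra. }
  assert (umax - r / 2 <= ws) by apply Rmax_r. lra.
Qed.

Lemma Sf_umax : Sf umax = 0.
Proof.
  unfold Sf. pose proof us_lt_umax. rewrite K_val by (unfold hi0; pose proof us_pos; lra).
  destruct umax_prop as [_ ->]. unfold Rdiv. rewrite Rmult_0_l, Rmult_0_r, sqrt_0. ring.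
Qed.

Lemma lim_uf : filterlim uf (at_left lmax) (locally (uf lmax)).
Proof.
  rewrite uf_lmax. apply atleft_lim. intros e He. destruct (uf_near e He) as [d [Hd H1]].
  exists d. split; auto. intros y Hy. destruct (H1 y Hy) as [_ H2]. rewrite Rabs_left; lra.
Qed.

Lemma lim_Ef : filterlim Ef (at_left lmax) (locally (Ef lmax)).
Proof.
  unfold Ef at 2. rewrite uf_lmax, Sf_umax. apply atleft_lim. intros e He.
  destruct (sqrtH_small e He) as [r [Hr H1]]. destruct (uf_near r Hr) as [d [Hd H2]].
  exists d. split; auto. intros y Hy. destruct (H2 y Hy) as [Iy H3]. destruct (H1 (uf y) H3) as [H4 H5].
  unfold Ef. rewrite S_sqrtH by (auto; apply uf_Iu; auto). rewrite Rminus_0_r, Rabs_right. auto.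
  apply Rle_ge, sqrt_pos.
Qed.

Lemma lim_du : filterlim (fun x => Gf (uf x)) (at_left lmax) (locally 0).
Proof.
  apply atleft_lim. intros e He. pose proof w1_prop as Hw1. pose proof us_lt_ubi as Hub. pose proof us_pos as Hus.
  set (Qw := pw w1 - pw us). assert (HQ : 0 < Qw) by (unfold Qw; pose proof (pw_lt us w1 ltac:(lra) ltac:(lra)); lra).
  set (Pm := Rpower umax g). assert (HP : 0 < Pm) by apply Rpower_pos'.
  destruct (sqrtH_small (e * Qw / Pm) ltac:(apply Rdiv_lt_0_compat; [nra|auto])) as [r [Hr H1]].
  destruct (uf_near (Rmin r (umax - w1)) ltac:(apply Rmin_pos; lra)) as [d [Hd H2]].
  exists d. split; auto. intros y Hy. destruct (H2 y Hy) as [Iy H3].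
  assert (Rmin r (umax - w1) <= r) by apply Rmin_l. assert (Rmin r (umax - w1) <= umax - w1) by apply Rmin_r.
  set (w := uf y) in *. assert (Iw : Iu w) by (apply uf_Iu; auto).
  destruct (H1 w ltac:(lra)) as [Hw4 Hw5].
  rewrite Rminus_0_r. rewrite G_S, S_sqrtH by (auto; lra).
  assert (HQw : Qw <= pw w - pw us) by (unfold Qw; pose proof (pw_le w1 w ltac:(lra) ltac:(lra)); lra).
  assert (HPw : Rpower w g <= Pm) by (apply Rle_Rpower_l; lra).
  assert (0 <= sqrt (2 * H w)) by apply sqrt_pos. assert (0 < Rpower w g) by apply Rpower_pos'.
  rewrite Rabs_right.
  2:{ apply Rle_ge. apply Rdiv_le_0_compat. apply Rmult_le_pos; lra. lra. }
  apply Rle_lt_trans with (sqrt (2 * H w) * Pm / Qw).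
  { unfold Rdiv. apply Rmult_le_compat. apply Rmult_le_pos; lra. left; apply Rinv_0_lt_compat; lra.
    apply Rmult_le_compat_l; lra. apply Rinv_le_contravar; lra. }
  apply (Rmult_lt_reg_r (Qw / Pm)). apply Rdiv_lt_0_compat; auto.
  replace (sqrt (2 * H w) * Pm / Qw * (Qw / Pm)) with (sqrt (2 * H w)) by (field; lra).
  replace (e * (Qw / Pm)) with (e * Qw / Pm) by (field; lra). auto.
Qed.

Lemma prop_i x : 0 <= x < lmax -> has_deriv_within (Ico 0 lmax) uf x (Gf (uf x)) /\ 0 < Gf (uf x).
Proof.
  intros Hx. assert (Ix x) by (apply Ico_Ix; auto). split. apply deriv_within. apply uf_der; auto.
  apply G_pos. apply uf_Iu; auto.
Qed.

Lemma uf_ge_u0 x : 0 <= x <= lmax -> u0 <= uf x.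
Proof.
  intros Hx. destruct (Req_dec x lmax) as [->|Hne]. rewrite uf_lmax. pose proof u0_Iu. unfold Iu in *; lra.
  assert (Ix x) by (apply Ico_Ix; unfold Ico; lra). destruct (uf_spec x H0) as [H1 H2].
  destruct (Rlt_le_dec (uf x) u0); auto. exfalso.
  assert (X (uf x) < X u0) by (apply X_inc; auto; [apply uf_Iu; auto| apply u0_Iu]). rewrite X_u0 in H3. lra.
Qed.

Lemma prop_iii p q : T_acc g J S0 ubi p q ->
  ((exists x, 0 <= x <= lmax /\ p = uf x /\ q = Ef x) <-> u0 <= p).
Proof.
  intros [Hp [HT1 HT2]]. fold us in HT2. change (H_fun g J S0 ubi p) with (H p) in HT1. split.
  - intros [x [Hx [-> _]]]. apply uf_ge_u0; auto.
  - intros Hup. assert (HHp : 0 <= H p) by (simpl in HT1; nra).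
    assert (Hpm : p <= umax) by (apply H_nonneg_le; auto).
    destruct (Req_dec p umax) as [->|Hne].
    + exists lmax. split. pose proof lmax_pos; lra. split. rewrite uf_lmax; auto.
      unfold Ef. rewrite uf_lmax, Sf_umax. destruct umax_prop as [_ Hu]. rewrite Hu in HT1. simpl in HT1. nra.
    + assert (Ip : Iu p) by (unfold Iu; lra). pose proof u0_Iu.
      exists (X p). assert (0 <= X p) by (rewrite <- X_u0; apply X_le; auto).
      assert (X p < lmax) by (apply X_lt_lmax; lra).
      split. lra. rewrite uf_X by (auto; unfold Iu in *; lra). split; auto.
      unfold Ef. rewrite uf_X by (auto; unfold Iu in *; lra).
      pose proof (SS p Ip). assert (Hsq : q * q = Sf p * Sf p) by (simpl in HT1; lra).
      destruct (Req_dec p us) as [->|Hpu].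
      * assert (HS0' : Sf us = 0) by (unfold Sf; ring). rewrite HS0' in *. nra.
      * pose proof (S_sign p Ip Hpu). destruct (Rlt_le_dec p us).
        -- assert (q <= 0) by nra. assert (Sf p < 0) by nra. nra.
        -- assert (0 <= q) by (destruct r; nra). assert (0 < Sf p) by (destruct r; nra). nra.
Qed.

Definition ls := X us.

Lemma ls_prop : 0 < ls < lmax.
Proof.
  unfold ls. pose proof us_Iu. pose proof u0_Iu. fold us in Hu0s. split.
  rewrite <- X_u0. apply X_inc; auto. apply X_lt_lmax. unfold Iu in *; lra.
Qed.

Lemma prop_iv : (forall x, 0 <= x < ls -> uf x < us) /\ uf ls = us /\ (forall x, ls < x < lmax -> us < uf x).
Proof.
  pose proof ls_prop. pose proof us_Iu. pose proof u0_Iu. fold us in Hu0s. split; [|split].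
  - intros x Hx. assert (Hix : Ix x) by (apply Ico_Ix; unfold Ico; lra). destruct (uf_spec x Hix) as [_ H3].
    apply (X_lt_iff (uf x) us). apply uf_Iu; auto. auto. unfold ls in Hx. lra.
  - unfold ls. apply uf_X; auto. unfold Iu in *; lra.
  - intros x Hx. assert (Hix : Ix x) by (apply Ico_Ix; unfold Ico; lra). destruct (uf_spec x Hix) as [_ H3].
    apply (X_lt_iff us (uf x)). auto. apply uf_Iu; auto. unfold ls in Hx. lra.
Qed.

Lemma prop_iv_uniq ls' : 0 < ls' < lmax -> uf ls' = us -> ls' = ls.
Proof.
  intros Hl Heq. assert (Ix ls') by (apply Ico_Ix; unfold Ico; lra). destruct (uf_spec ls' H0) as [_ H1].
  rewrite Heq in H1. unfold ls. auto.
Qed.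

Lemma sq_same_sign a b : a * a = b * b -> 0 < a * b -> a = b.
Proof.
  intros H1 H2. assert ((a - b) * (a + b) = 0) by nra. apply Rmult_integral in H0. destruct H0. lra.
  assert (b = - a) by lra. subst. nra.
Qed.

Lemma step_core (v F : R -> R) (t d : R) :
  (forall x, 0 < x < lmax -> v x <> us ->
     is_derive v x (F x * Rpower (v x) g / (Rpower (v x) (g + 1) - Rpower us (g + 1)))) ->
  (forall x, 0 < x < lmax -> is_derive F x (J / v x - J / ubi)) ->
  rcont v t -> rcont F t -> 0 <= t -> 0 < d -> t + d <= lmax ->
  (forall y, t < y < t + d -> Iu (v y) /\ v y <> us /\ 0 < (v y - us) * F y) ->
  v t = uf t -> F t = Ef t ->
  forall y, t <= y < t + d -> v y = uf y /\ F y = Ef y.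
Proof.
  intros Hveq HFeq Hvrc HFrc Ht0 Hd Htd Hin Hvt HFt.
  assert (Ixt : Ix t) by (apply Ico_Ix; unfold Ico; lra).
  assert (Iwt : Iu (v t)) by (rewrite Hvt; apply uf_Iu; auto).
  set (Phi := fun y => F y * F y + - (2 * H (v y))).
  assert (HPd : forall y, t < y < t + d -> is_derive Phi y 0).
  { intros y Hy. destruct (Hin y Hy) as [Iy [Hne Hs]]. unfold Iu in Iy.
    assert (Hq : pw (v y) - pw us <> 0).
    { destruct (Rlt_le_dec (v y) us). pose proof (pw_lt (v y) us ltac:(lra) r). lra.
      pose proof us_pos. pose proof (pw_lt us (v y) ltac:(lra) ltac:(lra)). lra. }
    assert (H1 := HFeq y ltac:(lra)). assert (H2 := Hveq y ltac:(lra) Hne).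
    assert (H3 := d_mult _ _ _ _ _ H1 H1).
    assert (H4 := is_derive_scal _ _ 2 _ (d_comp H v y _ _ (H_der (v y) ltac:(lra)) H2)).
    assert (H5 := d_plus _ _ _ _ _ H3 (is_derive_opp _ _ _ H4)).
    eapply d_eq. exact H5. intros z. reflexivity.
    change (Rpower (v y) (g + 1)) with (pw (v y)). change (Rpower us (g + 1)) with (pw us).
    change (opp (2 * (h (v y) * (F y * Rpower (v y) g / (pw (v y) - pw us))))) with (- (2 * (h (v y) * (F y * Rpower (v y) g / (pw (v y) - pw us))))).
    replace (h (v y) * (F y * Rpower (v y) g / (pw (v y) - pw us))) with (F y * (h (v y) * Rpower (v y) g / (pw (v y) - pw us))) by (field; auto).
    rewrite h_alg by lra. ring. }
  assert (HPrc : rcont Phi t).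
  { apply rcont_plus. apply rcont_mult; auto.
    apply rcont_opp. apply rcont_mult. apply rcont_const. apply (rcont_comp v H). auto. intros e He. apply (deriv_cont H (v t) (h (v t))). apply H_der.
    unfold Iu in Iwt; lra. auto. }
  assert (HPt : Phi t = 0).
  { unfold Phi. rewrite Hvt, HFt. unfold Ef. pose proof (SS (uf t) (uf_Iu t Ixt)). lra. }
  assert (HP0 : forall y, t <= y < t + d -> Phi y = 0).
  { intros y Hy. rewrite <- HPt. apply (zero_deriv_const Phi t (t + d)); auto. }
  assert (HFS : forall y, t < y < t + d -> F y = Sf (v y)).
  { intros y Hy. destruct (Hin y Hy) as [Iy [Hne Hs]]. apply sq_same_sign.
    pose proof (HP0 y ltac:(lra)). unfold Phi in H0. rewrite (SS (v y) Iy). lra.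
    pose proof (S_sign (v y) Iy Hne).
    assert (0 < ((v y - us) * F y) * ((v y - us) * Sf (v y))) by (apply Rmult_lt_0_compat; auto).
    assert (0 < (v y - us) * (v y - us)) by nra. nra. }
  set (Psi := fun y => X (v y) + - y).
  assert (HQd : forall y, t < y < t + d -> is_derive Psi y 0).
  { intros y Hy. destruct (Hin y Hy) as [Iy [Hne Hs]].
    assert (H2 := Hveq y ltac:(lra) Hne). rewrite (HFS y Hy) in H2.
    change (Rpower (v y) (g + 1)) with (pw (v y)) in H2. change (Rpower us (g + 1)) with (pw us) in H2.
    rewrite <- G_S in H2 by auto.
    assert (H4 := d_comp X v y _ _ (X_der (v y) Iy) H2).
    assert (H5 := d_plus _ _ _ _ _ H4 (is_derive_opp _ _ _ (d_id y))).
    eapply d_eq. exact H5. intros z; reflexivity. change (opp 1) with (-1).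
    field. pose proof (G_pos (v y) Iy). lra. }
  assert (HQrc : rcont Psi t).
  { apply rcont_plus. apply (rcont_comp v X). auto. intros e He. apply (deriv_cont X (v t) (/ Gf (v t))). apply X_der. auto. auto.
    apply rcont_opp. apply rcont_id. }
  assert (HQt : Psi t = 0).
  { unfold Psi. rewrite Hvt. destruct (uf_spec t Ixt) as [_ ->]. ring. }
  intros y Hy. destruct (Req_dec y t) as [->|Hyt]. auto.
  assert (Hy' : t < y < t + d) by lra. destruct (Hin y Hy') as [Iy [Hne Hs]].
  assert (HX : X (v y) = y). { pose proof (zero_deriv_const Psi t (t + d) HQd HQrc y Hy). unfold Psi in H0. unfold Psi in HQt. lra. }
  assert (Ixy : Ix y) by (apply Ico_Ix; unfold Ico; lra).
  destruct (uf_spec y Ixy) as [_ HXu].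
  assert (Hvu : v y = uf y) by (apply X_inj; auto; [apply uf_Iu; auto| lra]).
  split; auto. rewrite HFS by auto. unfold Ef. rewrite Hvu. auto.
Qed.

Lemma left_cont_within (f : R -> R) (t : R) : 0 < t < lmax -> smooth_on (Ico 0 lmax) f ->
  forall e, 0 < e -> exists d, 0 < d /\ forall y, 0 <= y < t -> Rabs (y - t) < d -> Rabs (f y - f t) < e.
Proof.
  intros Ht Hs e He. destruct (smooth_within _ f Hs t ltac:(unfold Ico; lra)) as [l Hl].
  destruct (within_cont _ f t l Hl e He) as [d [Hd H1]]. exists d. split; auto.
  intros y Hy Hyd. apply H1; auto. unfold Ico; lra.
Qed.

Lemma left_cont_der (f : R -> R) (t l : R) : is_derive f t l ->
  forall e, 0 < e -> exists d, 0 < d /\ forall y, 0 <= y < t -> Rabs (y - t) < d -> Rabs (f y - f t) < e.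
Proof.
  intros Hd e He. destruct (deriv_cont f t l Hd e He) as [d [Hd0 H1]]. exists d. split; auto.
Qed.

Lemma uniq E0 v F : T_acc g J S0 ubi u0 E0 -> is_solution g J S0 ubi u0 E0 lmax v F ->
  forall x, 0 <= x < lmax -> v x = uf x /\ F x = Ef x.
Proof.
  intros HT [Sv [SF [Vpos [V0 [F0 [Veq Feq]]]]]]. fold us in Veq.
  pose proof lmax_pos as Hl.
  assert (Vrc : forall t, 0 <= t < lmax -> rcont v t).
  { intros t Ht. destruct (smooth_within _ v Sv t Ht) as [l Hlv]. apply (rcont_within (Ico 0 lmax) v t l lmax); auto. lra.
    intros y Hy; unfold Ico; lra. }
  assert (Frc : forall t, 0 <= t < lmax -> rcont F t).
  { intros t Ht. destruct (smooth_within _ F SF t Ht) as [l Hlv]. apply (rcont_within (Ico 0 lmax) F t l lmax); auto. lra.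
    intros y Hy; unfold Ico; lra. }
  apply (cont_ind lmax (fun y => v y = uf y /\ F y = Ef y) Hl).
  -
    intros t Ht Hb. destruct (Req_dec t 0) as [->|Ht0].
    + rewrite V0, F0, uf0. split; auto. unfold Ef. rewrite uf0. apply E0_val; auto.
    + assert (Ixt : Ix t) by (apply Ico_Ix; unfold Ico; lra). split.
      * apply (left_eq v uf t 0). lra. apply left_cont_within; auto. lra.
        apply (left_cont_der uf t _ (uf_der t Ixt)). intros y Hy; apply Hb; auto.
      * apply (left_eq F Ef t 0). lra. apply left_cont_within; auto. lra.
        apply (left_cont_der Ef t _ (E_eq t Ixt)). intros y Hy; apply Hb; auto.
  -
    intros t Ht Hb. destruct (Hb t ltac:(lra)) as [Hvt HFt].
    assert (Ixt : Ix t) by (apply Ico_Ix; unfold Ico; lra).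
    assert (Iw : Iu (uf t)) by (apply uf_Iu; auto). set (w := uf t) in *.
    destruct (Req_dec w us) as [Hwus|Hwus].
    +
      assert (Ht0 : 0 < t).
      { destruct (Req_dec t 0) as [->|]. exfalso. unfold w in Hwus. rewrite uf0 in Hwus. fold us in Hu0s. lra. lra. }
      destruct (smooth_within _ v Sv t ltac:(unfold Ico; lra)) as [lv Hlv].
      apply (within_interior _ v t lv (Rmin t (lmax - t))) in Hlv.
      2:{ apply Rmin_pos; lra. }
      2:{ intros y Hy. unfold Ico. assert (Rmin t (lmax - t) <= t) by apply Rmin_l.
          assert (Rmin t (lmax - t) <= lmax - t) by apply Rmin_r. apply Rabs_lt_between in Hy. lra. }
      assert (Hlv' : lv = Gf w).
      { apply (left_deriv_eq v uf t 0 lv (Gf (uf t))); auto. apply uf_der; auto.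
        intros y Hy. apply Hb; lra. }
      pose proof (G_pos w Iw).
      destruct (pos_deriv_right v t lv Hlv ltac:(lra)) as [r1 [Hr1 K1]].
      assert (HFd := Feq t ltac:(lra)).
      assert (HFpos : 0 < J / v t - J / ubi).
      { rewrite Hvt. fold w. rewrite Hwus. pose proof us_lt_ubi. pose proof us_pos.
        assert (J / ubi < J / us); [|lra]. unfold Rdiv. apply Rmult_lt_compat_l; auto.
        apply Rinv_lt_contravar; nra. }
      destruct (pos_deriv_right F t _ HFd HFpos) as [r2 [Hr2 K2]].
      assert (HF0 : F t = 0) by (rewrite HFt; unfold Ef; fold w; rewrite Hwus; unfold Sf; ring).
      pose proof us_lt_umax.
      destruct (Vrc t ltac:(lra) (umax - us) ltac:(lra)) as [r3 [Hr3 K3]].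
      set (d := Rmin (Rmin r1 r2) (Rmin r3 (lmax - t))).
      assert (Hd1 : d <= r1) by (unfold d; eapply Rle_trans; [apply Rmin_l|apply Rmin_l]).
      assert (Hd2 : d <= r2) by (unfold d; eapply Rle_trans; [apply Rmin_l|apply Rmin_r]).
      assert (Hd3 : d <= r3) by (unfold d; eapply Rle_trans; [apply Rmin_r|apply Rmin_l]).
      assert (Hd4 : d <= lmax - t) by (unfold d; eapply Rle_trans; [apply Rmin_r|apply Rmin_r]).
      assert (Hd : 0 < d) by (unfold d; repeat apply Rmin_pos; lra).
      exists d. split; auto. apply (step_core v F t d); auto; try lra.
      intros y Hy. specialize (K1 y ltac:(lra)). specialize (K2 y ltac:(lra)). specialize (K3 y ltac:(lra)).
      rewrite Hvt in K1, K3. fold w in K1, K3. rewrite Hwus in K1, K3. rewrite HF0 in K2.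
      apply Rabs_lt_between in K3. pose proof us_pos.
      split. unfold Iu; lra. split. lra. apply Rmult_lt_0_compat; lra.
    +
      pose proof (S_sign w Iw Hwus) as HPt.
      assert (HPrc : rcont (fun y => (v y + - us) * F y) t).
      { apply rcont_mult. apply rcont_plus. apply Vrc; auto. apply rcont_const. apply Frc; auto. }
      destruct (HPrc ((w - us) * Sf w) HPt) as [r1 [Hr1 K1]].
      set (eta := Rmin (Rmin w (umax - w)) (Rabs (w - us))).
      assert (Heta : 0 < eta) by (unfold eta, Iu in *; repeat apply Rmin_pos; try lra; apply Rabs_pos_lt; lra).
      assert (He1 : eta <= w) by (unfold eta; eapply Rle_trans; [apply Rmin_l|apply Rmin_l]).
      assert (He2 : eta <= umax - w) by (unfold eta; eapply Rle_trans; [apply Rmin_l|apply Rmin_r]).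
      assert (He3 : eta <= Rabs (w - us)) by (unfold eta; apply Rmin_r).
      destruct (Vrc t ltac:(lra) eta Heta) as [r2 [Hr2 K2]].
      set (d := Rmin (Rmin r1 r2) (lmax - t)).
      assert (Hd1 : d <= r1) by (unfold d; eapply Rle_trans; [apply Rmin_l|apply Rmin_l]).
      assert (Hd2 : d <= r2) by (unfold d; eapply Rle_trans; [apply Rmin_l|apply Rmin_r]).
      assert (Hd4 : d <= lmax - t) by (unfold d; apply Rmin_r).
      assert (Hd : 0 < d) by (unfold d; repeat apply Rmin_pos; lra).
      exists d. split; auto. apply (step_core v F t d); auto; try lra.
      intros y Hy. specialize (K1 y ltac:(lra)). specialize (K2 y ltac:(lra)).
      rewrite Hvt in K1, K2. rewrite HFt in K1. fold w in K1, K2. unfold Ef in K1. fold w in K1.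
      apply Rabs_lt_between in K1. apply Rabs_lt_between in K2.
      split. unfold Iu in *; lra. split.
      * intros Hc. rewrite Hc in K2. destruct (Rle_lt_dec 0 (w - us)).
        rewrite Rabs_right in He3 by lra. lra. rewrite Rabs_left in He3 by lra. lra.
      * lra.
Qed.

Lemma main_sec : exists lmax ls : R, 0 < ls < lmax /\
    forall E0 : R, T_acc g J S0 ubi u0 E0 ->
    exists u E : R -> R,
      is_solution g J S0 ubi u0 E0 lmax u E /\
      (forall v F : R -> R, is_solution g J S0 ubi u0 E0 lmax v F ->
         forall x, 0 <= x < lmax -> v x = u x /\ F x = E x) /\
      filterlim u (at_left lmax) (locally (u lmax)) /\
      filterlim E (at_left lmax) (locally (E lmax)) /\
      (exists du : R -> R,
         (forall x, 0 <= x < lmax ->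
            has_deriv_within (Ico 0 lmax) u x (du x) /\ 0 < du x) /\
         filterlim du (at_left lmax) (locally 0)) /\
      (forall p q : R, T_acc g J S0 ubi p q ->
         ((exists x, 0 <= x <= lmax /\ p = u x /\ q = E x) <-> u0 <= p)) /\
      ((forall x, 0 <= x < ls -> u x < u_s g J S0) /\
       u ls = u_s g J S0 /\
       (forall x, ls < x < lmax -> u_s g J S0 < u x)) /\
      (forall ls' : R, 0 < ls' < lmax ->
         (forall x, 0 <= x < ls' -> u x < u_s g J S0) ->
         u ls' = u_s g J S0 ->
         (forall x, ls' < x < lmax -> u_s g J S0 < u x) ->
         ls' = ls).
Proof.
  exists lmax, ls. split. apply ls_prop. intros E0 HT.
  exists uf, Ef. split. apply exist_sol; auto.
  split. { intros v F Hs x Hx. apply (uniq E0 v F); auto. }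
  split. apply lim_uf. split. apply lim_Ef.
  split. { exists (fun x => Gf (uf x)). split. intros x Hx. apply prop_i; auto. apply lim_du. }
  split. { intros p q Hpq. apply prop_iii; auto. }
  split. { exact prop_iv. }
  intros ls' Hl' _ Heq _. apply prop_iv_uniq; auto.
Qed.

End Prob.

Theorem lemma1p1 :
  forall gamma J S0 ubi u0 : R,
    1 < gamma -> 0 < J -> 0 < S0 -> 0 < ubi ->
    ubi / u_s gamma J S0 > 1 ->
    u0 < u_s gamma J S0 ->
    exists lmax ls : R, 0 < ls < lmax /\
    forall E0 : R, T_acc gamma J S0 ubi u0 E0 ->
    exists u E : R -> R,
      (* existence *)
      is_solution gamma J S0 ubi u0 E0 lmax u E /\
      (* uniqueness *)
      (forall v F : R -> R, is_solution gamma J S0 ubi u0 E0 lmax v F ->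
         forall x, 0 <= x < lmax -> v x = u x /\ F x = E x) /\
      (* the solution extends continuously to x1 = lmax *)
      filterlim u (at_left lmax) (locally (u lmax)) /\
      filterlim E (at_left lmax) (locally (E lmax)) /\
      (* (i) and (ii) *)
      (exists du : R -> R,
         (forall x, 0 <= x < lmax ->
            has_deriv_within (Ico 0 lmax) u x (du x) /\ 0 < du x) /\
         filterlim du (at_left lmax) (locally 0)) /\
      (* (iii) *)
      (forall p q : R, T_acc gamma J S0 ubi p q ->
         ((exists x, 0 <= x <= lmax /\ p = u x /\ q = E x) <-> u0 <= p)) /\
      (* (iv) *)
      ((forall x, 0 <= x < ls -> u x < u_s gamma J S0) /\
       u ls = u_s gamma J S0 /\
       (forall x, ls < x < lmax -> u_s gamma J S0 < u x)) /\
      (forall ls' : R, 0 < ls' < lmax ->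
         (forall x, 0 <= x < ls' -> u x < u_s gamma J S0) ->
         u ls' = u_s gamma J S0 ->
         (forall x, ls' < x < lmax -> u_s gamma J S0 < u x) ->
         ls' = ls).
Proof.
  intros gamma J S0 ubi u0 Hg HJ HS0 Hubi Hz Hu0s.
  destruct (Rle_lt_dec u0 0) as [Hle|Hpos].
  - exists 2, 1. split. lra. intros E0 [Hc _]. exfalso. lra.
  - exact (main_sec gamma J S0 ubi u0 Hg HJ Hubi Hz Hpos Hu0s).
Qed.
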